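(* Let $A=(a_{ij})_{i,j\in I}$ be a generalized Cartan matrix with finite index set $I$, and let $U=(u_{ij})_{i,j\in I}$ be a complex matrix satisfying: (0) $u_{ij}=0$ if $i=j$ or $a_{ij}=0$; (1) $u_{ij}=-u_{ji}$ if $(a_{ij},a_{ji})=(-1,-1)$; (2) $u_{ij}\in\{-u_{ji},-2u_{ji}\}$ if $(a_{ij},a_{ji})=(-2,-1)$; (3) $u_{ij}\in\{-u_{ji},-\tfrac32u_{ji},-2u_{ji},-3u_{ji}\}$ if $(a_{ij},a_{ji})=(-3,-1)$. For each $i\in I$ let $s_i$ be the $\mathbb{C}$-automorphism of the field $\mathbb{C}(\alpha;f)$ determined by $$s_i(\alpha_j)=\alpha_j-a_{ij}\alpha_i,\qquad s_i(f_j)=f_j+\frac{\alpha_i}{f_i}\,u_{ij}\qquad(j\in I).$$ Then $s_i\mapsto s_i$ defines a representation of the Coxeter group $W(A)$ on $\mathbb{C}(\alpha;f)$ by field automorphisms; i.e. $s_i^2=\mathrm{id}$ for all $i$ and $(s_is_j)^{m_{ij}}=\mathrm{id}$ for all $i\neq j$ with $m_{ij}<\infty$.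
   Context: A generalized Cartan matrix $A=(a_{ij})_{i,j\in I}$ is an integer matrix with $a_{jj}=2$, $a_{ij}\le 0$ for $i\ne j$, and $a_{ij}=0\iff a_{ji}=0$. $\mathbb{C}(\alpha;f)$ denotes the field of rational functions over $\mathbb{C}$ in independent variables $\alpha_j,f_j$ ($j\in I$). The Coxeter group $W(A)$ is generated by $s_i$ ($i\in I$) with relations $s_i^2=1$ and $(s_is_j)^{m_{ij}}=1$ for $i\neq j$, where $m_{ij}=2,3,4,6,\infty$ according as $a_{ij}a_{ji}=0,1,2,3,\ge4$ (no relation when $m_{ij}=\infty$). *)

(* Defs.v *)
(* C = complex numbers built as (Stdlib reals)[i],
   C(alpha;f) = fraction field of the multivariate polynomial ring C[X_0..X_{2n-1}],
   with alpha_j = X_j (j < n) and f_j = X_{n+j}. *)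
From HB Require Import structures.
From mathcomp Require Import all_boot all_order all_algebra.
From mathcomp Require Import fraction.
From mathcomp Require Import mpoly.
From mathcomp Require Import complex.
From mathcomp Require Import Rstruct.
Set Implicit Arguments. Unset Strict Implicit. Unset Printing Implicit Defensive.
Import GRing.Theory.
Local Open Scope ring_scope.

Definition RR : rcfType := Rdefinitions.R.
Definition CC : fieldType := complex RR.

Definition RatF (n : nat) := {fraction {mpoly CC[n + n]}}.

Definition alpha (n : nat) (j : 'I_n) : RatF n := tofrac ('X_(lshift n j)).
Definition fvar  (n : nat) (j : 'I_n) : RatF n := tofrac ('X_(rshift n j)).
Definition cst (n : nat) (c : CC) : RatF n := tofrac (c%:MP).

Definition is_gcm (n : nat) (A : 'M[int]_n) : Prop :=
  [/\ (forall j, A j j = 2%:Z),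
      (forall i j, i != j -> A i j <= 0) &
      (forall i j, A i j = 0 <-> A j i = 0)].

(* Coxeter exponent m_ij from the product a_ij a_ji; None encodes infinity *)
Definition coxeter_m (p : int) : option nat :=
  if p == 0 then Some 2%N
  else if p == 1 then Some 3%N
  else if p == 2%:Z then Some 4%N
  else if p == 3%:Z then Some 6%N
  else None.

Definition admissible_U (n : nat) (A : 'M[int]_n) (U : 'M[CC]_n) : Prop :=
  [/\ (forall i j, (i == j) || (A i j == 0) -> U i j = 0),
      (forall i j, A i j = -1 -> A j i = -1 -> U i j = - U j i),
      (forall i j, A i j = -2%:Z -> A j i = -1 ->
          U i j = - U j i \/ U i j = - (2%:R * U j i)) &
      (forall i j, A i j = -3%:Z -> A j i = -1 ->
          [\/ U i j = - U j i, U i j = - ((3%:R / 2%:R) * U j i),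
              U i j = - (2%:R * U j i) | U i j = - (3%:R * U j i)])].

Definition is_s (n : nat) (A : 'M[int]_n) (U : 'M[CC]_n) (i : 'I_n)
    (s : {rmorphism RatF n -> RatF n}) : Prop :=
  [/\ bijective s,
      (forall c : CC, s (cst n c) = cst n c),
      (forall j, s (alpha j) = alpha j - (A i j)%:~R * alpha i) &
      (forall j, s (fvar j) = fvar j + (alpha i / fvar i) * cst n (U i j))].

(* Main.v *)
Require Import Defs.
From HB Require Import structures.
From mathcomp Require Import all_boot all_order all_algebra.
From mathcomp Require Import fraction mpoly complex Rstruct.
From mathcomp Require Import generic_quotient ring zify.
From Stdlib Require Import ClassicalEpsilon.
Set Implicit Arguments. Unset Strict Implicit. Unset Printing Implicit Defensive.
Import GRing.Theory.
Local Open Scope ring_scope.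
Local Open Scope quotient_scope.

Lemma frac_repr (R : idomainType) (x : {fraction R}) :
  exists a b : R, b != 0 /\ x = tofrac a / tofrac b.
Proof.
elim/quotW: x => r.
exists (\n_r), (\d_r); split; first exact: denom_ratioP.
have hd : tofrac (\d_r) != 0 :> {fraction R} by rewrite tofrac_eq0 denom_ratioP.
apply: (canRL (mulfK hd)).
unlock tofrac.
rewrite (_ : _ * _ = \pi_({fraction R}) (FracField.mulf r (Ratio \d_r 1))); last by rewrite FracField.pi_mul.
apply/eqmodP; rewrite /= FracField.equivfE /FracField.mulf !numden_Ratio ?mulr1 ?oner_neq0 ?mulf_neq0 ?denom_ratioP //.
by rewrite mulrC.
Qed.

Definition fext (R : idomainType) (F : fieldType) (phi : {rmorphism R -> F})
  (inj : forall r, phi r = 0 -> r = 0) (x : {fraction R}) : F :=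
  let ab := epsilon (inhabits (0:R, 1:R))
     (fun ab => ab.2 != 0 /\ x = tofrac ab.1 / tofrac ab.2) in phi ab.1 / phi ab.2.

Lemma phi_neq0 (R : idomainType) (F : fieldType) (phi : {rmorphism R -> F})
  (inj : forall r, phi r = 0 -> r = 0) r : r != 0 -> phi r != 0.
Proof. by move=> hr; apply/eqP=> /inj /eqP; rewrite (negbTE hr). Qed.

Lemma fextE (R : idomainType) (F : fieldType) (phi : {rmorphism R -> F})
  (inj : forall r, phi r = 0 -> r = 0) a b :
  b != 0 -> fext inj (tofrac a / tofrac b) = phi a / phi b.
Proof.
move=> hb; rewrite /fext.
set ab := epsilon _ _.
have [hb' he] : ab.2 != 0 /\ tofrac a / tofrac b = tofrac ab.1 / tofrac ab.2.
  by apply: (epsilon_spec _ (fun ab => ab.2 != 0 /\ _ = tofrac ab.1 / tofrac ab.2)); exists (a, b).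
have tb : tofrac b != 0 :> {fraction R} by rewrite tofrac_eq0.
have tb' : tofrac ab.2 != 0 :> {fraction R} by rewrite tofrac_eq0.
have e2 : a * ab.2 = ab.1 * b.
  apply/eqP; rewrite -tofrac_eq !rmorphM /=; apply/eqP.
  by move/eqP: he; rewrite eqr_div // => /eqP.
have pb := phi_neq0 inj hb; have pb' := phi_neq0 inj hb'.
apply/eqP; rewrite eqr_div // -!rmorphM /=. by rewrite e2.
Qed.

Lemma divB (K : fieldType) (a b c d : K) : b != 0 -> d != 0 ->
  a/b - c/d = (a*d - c*b)/(b*d).
Proof. move=> hb hd. field. by apply/andP. Qed.

Section FextMorph.
Context (R : idomainType) (F : fieldType) (phi : {rmorphism R -> F})
  (inj : forall r, phi r = 0 -> r = 0).

Lemma fext_zmod : zmod_morphism (fext inj).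
Proof.
move=> x y.
have [a [b [hb ->]]] := frac_repr x.
have [c [d [hd ->]]] := frac_repr y.
have tb : tofrac b != 0 :> {fraction R} by rewrite tofrac_eq0.
have td : tofrac d != 0 :> {fraction R} by rewrite tofrac_eq0.
have pb := phi_neq0 inj hb; have pd := phi_neq0 inj hd.
rewrite divB // -!rmorphM -!rmorphB !fextE ?mulf_neq0 // divB //.
by rewrite !rmorphB !rmorphM.
Qed.

Lemma fext_monoid : monoid_morphism (fext inj).
Proof.
split.
  have -> : (1 : {fraction R}) = tofrac 1 / tofrac 1 by rewrite rmorph1 divr1.
  by rewrite fextE ?oner_neq0 // rmorph1 divr1.
move=> x y.
have [a [b [hb ->]]] := frac_repr x.
have [c [d [hd ->]]] := frac_repr y.
rewrite mulf_div -!rmorphM !fextE ?mulf_neq0 //.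
by rewrite !rmorphM mulf_div.
Qed.

End FextMorph.

HB.instance Definition _ (R : idomainType) (F : fieldType) (phi : {rmorphism R -> F})
  (inj : forall r, phi r = 0 -> r = 0) :=
  GRing.isZmodMorphism.Build _ _ (fext inj) (fext_zmod inj).
HB.instance Definition _ (R : idomainType) (F : fieldType) (phi : {rmorphism R -> F})
  (inj : forall r, phi r = 0 -> r = 0) :=
  GRing.isMonoidMorphism.Build _ _ (fext inj) (fext_monoid inj).

Lemma fext_tofrac (R : idomainType) (F : fieldType) (phi : {rmorphism R -> F})
  (inj : forall r, phi r = 0 -> r = 0) r : fext inj (tofrac r) = phi r.
Proof.
have -> : tofrac r = tofrac r / tofrac 1 :> {fraction R} by rewrite rmorph1 divr1.
by rewrite fextE ?oner_neq0 // rmorph1 divr1.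
Qed.

Definition rmor (R S : pzRingType) (g : R -> S) :=
  [/\ forall x y, g (x + y) = g x + g y, forall x y, g (x * y) = g x * g y & g 1 = 1].

Lemma rmor0 (R S : pzRingType) (g : R -> S) : rmor g -> g 0 = 0.
Proof. case=> gD _ _; have := gD 0 0; rewrite addr0 => /(congr1 (fun z => z - g 0)).
by rewrite addrK subrr. Qed.

Lemma rmorX (R S : pzRingType) (g : R -> S) : rmor g -> forall x k, g (x ^+ k) = g x ^+ k.
Proof. case=> _ gM g1 x; elim=> [|k IH]; first by rewrite !expr0.
by rewrite !exprS gM IH. Qed.

Lemma rmor_rm (R S : pzRingType) (g : {rmorphism R -> S}) : rmor g.
Proof. by split; [exact: rmorphD | exact: rmorphM | exact: rmorph1]. Qed.

Lemma rmor_comp (R : pzRingType) (f g : {rmorphism R -> R}) : rmor (fun x => f (g x)).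
Proof. by split=> [a b|a b|] /=; rewrite ?rmorphD ?rmorphM ?rmorph1. Qed.

Lemma mpoly_ext (n : nat) (R : nzRingType) (S : pzRingType) (g h : {mpoly R[n]} -> S) :
  rmor g -> rmor h -> (forall c, g c%:MP = h c%:MP) -> (forall v, g 'X_v = h 'X_v) ->
  forall p, g p = h p.
Proof.
move=> rg rh hc hX p.
have [gD gM g1] := rg; have [hD hM h1] := rh.
have g0 := rmor0 rg; have h0 := rmor0 rh.
rewrite [p]mpolyE (big_morph g gD g0) (big_morph h hD h0).
apply: eq_bigr => m _.
rewrite -mul_mpolyC gM hM hc; congr (_ * _).
rewrite mpolyXE_id (big_morph g gM g1) (big_morph h hM h1).
by apply: eq_bigr => v _; rewrite (rmorX rg) (rmorX rh) hX.
Qed.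

Section K.
Variable n : nat.
Local Notation K := (RatF n).
Local Notation P := {mpoly CC[n + n]}.

Lemma rmor_ext (h : K -> K) : rmor h ->
  (forall c, h (cst n c) = cst n c) -> (forall j, h (alpha j) = alpha j) ->
  (forall j, h (fvar j) = fvar j) -> forall x, h x = x.
Proof.
move=> rh hc ha hf.
have ht : forall p : P, h (tofrac p) = tofrac p.
  apply: (@mpoly_ext _ _ _ (fun p => h (tofrac p)) (fun p => tofrac p)).
  - have [hD hM h1] := rh; split => [x y|x y|]; by rewrite ?rmorphD ?rmorphM ?rmorph1.
  - exact: rmor_rm.
  - exact: hc.
  - move=> v; case: (split_ordP v) => j ->; [exact: ha | exact: hf].
move=> x; have [a [b [hb ->]]] := frac_repr x.
have [_ hM h1] := rh.
have tb : tofrac b != 0 :> K by rewrite tofrac_eq0.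
rewrite hM ht; congr (_ * _).
have e : h (tofrac b) * h (tofrac b)^-1 = 1 by rewrite -hM mulfV.
rewrite ht in e.
by rewrite -[LHS]mul1r -(mulVf tb) -mulrA e mulr1.
Qed.

End K.

Lemma cst_zmod n : zmod_morphism (cst n).
Proof. by move=> a b; rewrite /cst mpolyCB rmorphB. Qed.
HB.instance Definition _ n := GRing.isZmodMorphism.Build CC (RatF n) (cst n) (cst_zmod n).
Lemma cst_monoid n : monoid_morphism (cst n).
Proof. split; first by rewrite /cst mpolyC1 rmorph1. by move=> a b; rewrite /cst mpolyCM rmorphM. Qed.
HB.instance Definition _ n := GRing.isMonoidMorphism.Build CC (RatF n) (cst n) (cst_monoid n).

Lemma addf_div_pow (F : fieldType) (x q1 q2 : F) (k1 k2 : nat) : x != 0 ->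
  q1 / x ^+ k1 + q2 / x ^+ k2 = (q1 * x ^+ k2 + q2 * x ^+ k1) / x ^+ (k1 + k2).
Proof.
move=> hx; have h1 : x ^+ k1 != 0 by rewrite expf_neq0.
have h2 : x ^+ k2 != 0 by rewrite expf_neq0.
rewrite exprD; field; by apply/andP.
Qed.

Lemma mulf_div_pow (F : fieldType) (x q1 q2 : F) (k1 k2 : nat) :
  q1 / x ^+ k1 * (q2 / x ^+ k2) = (q1 * q2) / x ^+ (k1 + k2).
Proof. by rewrite mulf_div exprD. Qed.

Section Constr.
Context (n : nat) (A : 'M[int]_n) (U : 'M[CC]_n) (i : 'I_n).
Context (Aii : A i i = 2%:Z) (Uii : U i i = 0).
Local Notation K := (RatF n).
Local Notation P := {mpoly CC[n + n]}.


Definition hv (v : 'I_(n + n)) : K :=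
  match split v with
  | inl j => alpha j - (A i j)%:~R * alpha i
  | inr j => fvar j + alpha i / fvar i * cst n (U i j)
  end.

Definition phi : {rmorphism P -> K} := mmap (cst n) hv.

Lemma phiC c : phi c%:MP = cst n c.
Proof. exact: mmapC. Qed.

Lemma phiX v : phi 'X_v = hv v.
Proof. have := mmapX hv (cst n) U_(v)%MM; rewrite mmap1U; exact. Qed.

Lemma hv_l j : hv (lshift n j) = alpha j - (A i j)%:~R * alpha i.
Proof. by rewrite /hv (unsplitK (inl _ j)). Qed.

Lemma hv_r j : hv (rshift n j) = fvar j + alpha i / fvar i * cst n (U i j).
Proof. by rewrite /hv (unsplitK (inr _ j)). Qed.

Lemma cst0 : cst n 0 = 0.
Proof. exact: rmorph0. Qed.

Lemma phi_ai : phi 'X_(lshift n i) = - alpha i.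
Proof. rewrite phiX hv_l Aii. ring. Qed.

Lemma phi_fi : phi 'X_(rshift n i) = fvar i.
Proof. by rewrite phiX hv_r Uii cst0 mulr0 addr0. Qed.

Lemma X_neq0 v : 'X_v != 0 :> P.
Proof.
apply/eqP=> h; have e : ('X_v : P)@_(U_(v)%MM) = 1 by rewrite mcoeffX eqxx.
by move: e; rewrite h mcoeff0 => /eqP; rewrite eq_sym oner_eq0.
Qed.

Lemma fvar_neq0 j : fvar j != 0 :> K.
Proof. by rewrite /fvar tofrac_eq0 X_neq0. Qed.

Lemma alpha_neq0 j : alpha j != 0 :> K.
Proof. by rewrite /alpha tofrac_eq0 X_neq0. Qed.


Lemma fold_f (F : fieldType) (a c fj x : F) : x != 0 -> fj + a / x * c = (fj * x + c * a) / x.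
Proof. by move=> hx; field. Qed.

Lemma unfold_f (F : fieldType) (a c fj x : F) : x != 0 -> ((fj + a / x * c) * x + c * - a) / x = fj.
Proof. by move=> hx; field. Qed.

Local Notation x0 := (fvar i : K).
Local Notation Xf := ('X_(rshift n i) : P).

Definition Sset (y : K) := exists q (k : nat), y = tofrac q / x0 ^+ k.

Lemma tofracXf k : tofrac (Xf ^+ k) = x0 ^+ k.
Proof. by rewrite rmorphXn. Qed.

Lemma phiXf k : phi (Xf ^+ k) = x0 ^+ k.
Proof. by rewrite rmorphXn /= phi_fi. Qed.

Lemma SsetD y z : Sset y -> Sset z -> Sset (y + z).
Proof.
move=> [q1 [k1 ->]] [q2 [k2 ->]]; exists (q1 * Xf ^+ k2 + q2 * Xf ^+ k1), (k1 + k2)%N.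
by rewrite (addf_div_pow _ _ _ _ (fvar_neq0 i)) rmorphD !rmorphM /= !tofracXf.
Qed.

Lemma SsetM y z : Sset y -> Sset z -> Sset (y * z).
Proof.
move=> [q1 [k1 ->]] [q2 [k2 ->]]; exists (q1 * q2), (k1 + k2)%N.
by rewrite mulf_div_pow rmorphM.
Qed.

Lemma Sset_tofrac q : Sset (tofrac q).
Proof. by exists q, 0%N; rewrite expr0 divr1. Qed.

Lemma Sset_hv v : Sset (hv v).
Proof.
case: (split_ordP v) => j ->.
  exists ('X_(lshift n j) - (A i j)%:~R * 'X_(lshift n i)), 0%N.
  by rewrite hv_l expr0 divr1 rmorphB /= rmorphM /= rmorph_int.
exists ('X_(rshift n j) * Xf + (U i j)%:MP * 'X_(lshift n i)), 1%N.
rewrite hv_r expr1 fold_f; last exact: fvar_neq0.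
by rewrite rmorphD !rmorphM.
Qed.

Lemma Sset_phi p : Sset (phi p).
Proof.
rewrite [p]mpolyE rmorph_sum /=.
apply: (big_ind Sset); [exact: (Sset_tofrac 0) | exact: SsetD | ].
move=> m _; rewrite -mul_mpolyC rmorphM /= phiC.
apply: SsetM; first exact: Sset_tofrac.
rewrite mpolyXE_id rmorph_prod /=.
apply: (big_ind Sset); [exact: (Sset_tofrac 1) | exact: SsetM | ].
move=> v _; rewrite rmorphXn /= phiX.
elim: (m v) => [|k IH]; first by rewrite expr0; exact: (Sset_tofrac 1).
by rewrite exprS; apply: SsetM => //; exact: Sset_hv.
Qed.

Definition Psi (y : K) : K :=
  let qk := epsilon (inhabits (0 : P, 0%N))
     (fun qk => y = tofrac qk.1 / x0 ^+ qk.2) in phi qk.1 / x0 ^+ qk.2.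

Lemma PsiE q k : Psi (tofrac q / x0 ^+ k) = phi q / x0 ^+ k.
Proof.
rewrite /Psi /=; set qk := epsilon _ _.
have he : tofrac q / x0 ^+ k = tofrac qk.1 / x0 ^+ qk.2.
  by apply: (epsilon_spec _ (fun qk => _ = tofrac qk.1 / x0 ^+ qk.2)); exists (q, k).
have hx := fvar_neq0 i.
have h1 := expf_neq0 k hx.
have h2 := expf_neq0 qk.2 hx.
have e : q * Xf ^+ qk.2 = qk.1 * Xf ^+ k.
  by move/eqP: he; rewrite (eqr_div _ _ h1 h2) -!tofracXf -!rmorphM tofrac_eq => /eqP.
apply/eqP; rewrite (eqr_div _ _ h2 h1) -!phiXf -!rmorphM.
by rewrite e.
Qed.

Lemma Psi_tofrac q : Psi (tofrac q) = phi q.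
Proof. by have := PsiE q 0; rewrite expr0 !divr1. Qed.

Lemma rmor_Psiphi : rmor (fun p => Psi (phi p)).
Proof.
split.
- move=> p1 p2; have [q1 [k1 e1]] := Sset_phi p1; have [q2 [k2 e2]] := Sset_phi p2.
  have hx := fvar_neq0 i.
  have e3 : tofrac q1 / x0 ^+ k1 + tofrac q2 / x0 ^+ k2 =
    tofrac (q1 * Xf ^+ k2 + q2 * Xf ^+ k1) / x0 ^+ (k1 + k2).
    by rewrite (addf_div_pow _ _ _ _ hx) rmorphD !rmorphM /= !tofracXf.
  rewrite rmorphD /= e1 e2 e3 !PsiE rmorphD !rmorphM /= !phiXf.
  by rewrite (addf_div_pow _ _ _ _ hx).
- move=> p1 p2; have [q1 [k1 e1]] := Sset_phi p1; have [q2 [k2 e2]] := Sset_phi p2.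
  have e3 : tofrac q1 / x0 ^+ k1 * (tofrac q2 / x0 ^+ k2) =
    tofrac (q1 * q2) / x0 ^+ (k1 + k2) by rewrite mulf_div_pow rmorphM.
  rewrite rmorphM /= e1 e2 e3 !PsiE rmorphM /=.
  by rewrite mulf_div_pow.
- by have := Psi_tofrac 1; rewrite !rmorph1.
Qed.

Lemma Psiphi p : Psi (phi p) = tofrac p.
Proof.
apply: (@mpoly_ext _ _ _ (fun p => Psi (phi p)) (fun p => tofrac p)).
- exact: rmor_Psiphi.
- exact: rmor_rm.
- by move=> c; rewrite phiC Psi_tofrac phiC.
- move=> v; rewrite phiX; case: (split_ordP v) => j -> /=.
    have -> : hv (lshift n j) = tofrac ('X_(lshift n j) - (A i j)%:~R * 'X_(lshift n i)).
      by rewrite hv_l rmorphB rmorphM rmorph_int.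
    rewrite Psi_tofrac rmorphB rmorphM rmorph_int phi_ai phiX hv_l.
    rewrite -[tofrac 'X_(lshift n j)]/(alpha j); ring.
  rewrite hv_r.
  have hx := fvar_neq0 i.
  have -> : fvar j + alpha i / fvar i * cst n (U i j) =
      tofrac ('X_(rshift n j) * Xf + (U i j)%:MP * 'X_(lshift n i)) / x0 ^+ 1.
    by rewrite expr1 fold_f // rmorphD !rmorphM.
  rewrite PsiE expr1 rmorphD !rmorphM /= phiX hv_r phi_fi phiC phi_ai.
  by rewrite unfold_f.
Qed.

Lemma phi_inj p : phi p = 0 -> p = 0.
Proof.
move=> h; apply/eqP; rewrite -tofrac_eq0 -Psiphi h.
apply/eqP; have := Psi_tofrac 0; rewrite !rmorph0; exact.
Qed.

Definition sK : {rmorphism K -> K} := fext phi_inj.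

Lemma sK_tofrac p : sK (tofrac p) = phi p.
Proof. exact: fext_tofrac. Qed.

Lemma sK_cst c : sK (cst n c) = cst n c.
Proof. by rewrite /cst sK_tofrac phiC. Qed.

Lemma sK_alpha j : sK (alpha j) = alpha j - (A i j)%:~R * alpha i.
Proof. by rewrite /alpha sK_tofrac phiX hv_l. Qed.

Lemma sK_fvar j : sK (fvar j) = fvar j + alpha i / fvar i * cst n (U i j).
Proof. by rewrite /fvar sK_tofrac phiX hv_r. Qed.

Lemma sK_ai : sK (alpha i) = - alpha i.
Proof. rewrite sK_alpha Aii; ring. Qed.

Lemma sK_fi : sK (fvar i) = fvar i.
Proof. by rewrite sK_fvar Uii rmorph0 mulr0 addr0. Qed.

Lemma sKK x : sK (sK x) = x.
Proof.
apply: (rmor_ext (h := fun x => sK (sK x))).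
- exact: rmor_comp.
- by move=> c; rewrite !sK_cst.
- by move=> j; rewrite sK_alpha rmorphB rmorphM rmorph_int sK_alpha sK_ai; ring.
- move=> j; rewrite sK_fvar rmorphD !rmorphM fmorphV sK_fvar sK_fi sK_ai sK_cst.
  by rewrite mulNr mulNr addrK.
Qed.

Lemma sK_is_s : is_s A U i sK.
Proof.
split.
- by exists sK; move=> x; exact: sKK.
- exact: sK_cst.
- exact: sK_alpha.
- exact: sK_fvar.
Qed.

End Constr.

Lemma exists_s (n : nat) (A : 'M[int]_n) (U : 'M[CC]_n) (i : 'I_n) :
  A i i = 2%:Z -> U i i = 0 -> exists s : {rmorphism RatF n -> RatF n}, is_s A U i s.
Proof. by move=> Aii Uii; exists (sK Aii Uii); exact: sK_is_s. Qed.
Lemma eqQ (F : fieldType) (x y a u : F) : x != 0 -> x * (y + a / x * u) = x * y + u * a.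
Proof. by move=> hx; field. Qed.

Lemma eqYQ (F : fieldType) (x y a u : F) : x != 0 -> y + a / x * u = (x * y + u * a) / x.
Proof. by move=> hx; field. Qed.

Lemma mulYD (F : fieldType) (X B V Y : F) : Y != 0 -> (X + B / Y * V) * Y = X * Y + B * V.
Proof. by move=> hY; field. Qed.

Lemma auxX (F : fieldType) (X x Q : F) : x != 0 -> Q != 0 -> X = x * (X * (Q / x)) / Q.
Proof. by move=> hx hQ; field; apply/andP. Qed.

Lemma stepP (F : fieldType) (a b x y : nat -> F) (Aij uij uji : F)
  (hx : forall t, x t.+1 = x t + (b t - Aij * a t) / (y t + a t / x t * uij) * uji)
  (hy : forall t, y t.+1 = y t + a t / x t * uij)
  (nx : forall t, x t != 0) (nq : forall t, y t + a t / x t * uij != 0) :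
  forall t, x t.+1 * y t.+1 = x t * y t + uij * a t + uji * (b t - Aij * a t).
Proof.
move=> t; rewrite hx hy (mulYD _ _ _ (nq t)) eqQ; last exact: nx.
ring.
Qed.


Lemma stepX (F : fieldType) (a b x y : nat -> F) (Aij uij uji : F)
  (hx : forall t, x t.+1 = x t + (b t - Aij * a t) / (y t + a t / x t * uij) * uji)
  (hy : forall t, y t.+1 = y t + a t / x t * uij)
  (nx : forall t, x t != 0) (nq : forall t, y t + a t / x t * uij != 0) :
  forall t, x t.+1 = x t * (x t.+1 * y t.+1) / (x t * y t + uij * a t).
Proof.
move=> t; rewrite [y t.+1]hy (eqYQ _ _ _ (nx t)).
apply: auxX; first exact: nx.
by rewrite -(eqQ _ _ _ (nx t)); apply: mulf_neq0.
Qed.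

Ltac nz1 := match goal with H : is_true (?L != 0) |- is_true (?E != 0) => (have -> : E = L by ring); exact H end.
Ltac nzt := repeat (apply/andP; split); first [assumption | nz1].
Lemma case00 (F : fieldType) (a b x y : nat -> F) (u : F)
  (h2 : (2%:R : F) != 0) (h3 : (3%:R : F) != 0)
  (ha : forall t, a t.+1 = - a t - 0 * (b t - 0 * a t))
  (hb : forall t, b t.+1 = - (b t - 0 * a t))
  (hx : forall t, x t.+1 = x t + (b t - 0 * a t) / (y t + a t / x t * 0) * 0)
  (hy : forall t, y t.+1 = y t + a t / x t * 0)
  (nx : forall t, x t != 0) (ny : forall t, y t != 0)
  (nq : forall t, y t + a t / x t * 0 != 0) :
  [/\ a 0 + a 1 = 0, b 0 + b 1 = 0,
      a 0 / x 0 + a 1 / x 1 = 0 &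
      (b 0 - 0 * a 0) / (y 0 + a 0 / x 0 * 0) + (b 1 - 0 * a 1) / (y 1 + a 1 / x 1 * 0) = 0].
Proof.
have eP := stepP hx hy nx nq.
have ex := stepX hx hy nx nq.
have ca1 : a 1 = (((- 1%:R)) * a 0) by rewrite ha ; ring.
have cb1 : b 1 = (((- 1%:R)) * b 0) by rewrite hb ; ring.
have cP1 : x 1 * y 1 = (((1%:R)) * (x 0 * y 0)) by rewrite eP ; ring.
have cx1 : x 1 = x 0 * (((1%:R)) * (x 0 * y 0)) / ((x 0 * y 0) + 0 * a 0) by rewrite (ex 0) cP1 .
have nP0 : x 0 * y 0 != 0 by exact: mulf_neq0.
have nQ0 : ((x 0 * y 0) + 0 * a 0) != 0 by rewrite -(eqQ _ _ _ (nx 0)); exact: mulf_neq0.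
have nP1 : (((1%:R)) * (x 0 * y 0)) != 0 by rewrite -cP1; exact: mulf_neq0.
have nQ1 : ((((1%:R)) * (x 0 * y 0)) + 0 * (((- 1%:R)) * a 0)) != 0 by rewrite -cP1 -ca1 -(eqQ _ _ _ (nx 1)); exact: mulf_neq0.
have nx0 := nx 0. have ny0 := ny 0.
split.
- rewrite ca1; ring.
- rewrite cb1; ring.
- rewrite ca1 cx1; field; nzt.
- rewrite (eqYQ _ _ _ (nx 0)) (eqYQ _ _ _ (nx 1)).
  rewrite cP1 ca1 cb1 cx1; field; nzt.
Qed.

Lemma caseA2 (F : fieldType) (a b x y : nat -> F) (u : F)
  (h2 : (2%:R : F) != 0) (h3 : (3%:R : F) != 0)
  (ha : forall t, a t.+1 = - a t - (- 1%:R) * (b t - (- 1%:R) * a t))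
  (hb : forall t, b t.+1 = - (b t - (- 1%:R) * a t))
  (hx : forall t, x t.+1 = x t + (b t - (- 1%:R) * a t) / (y t + a t / x t * ((- 1%:R) * u)) * u)
  (hy : forall t, y t.+1 = y t + a t / x t * ((- 1%:R) * u))
  (nx : forall t, x t != 0) (ny : forall t, y t != 0)
  (nq : forall t, y t + a t / x t * ((- 1%:R) * u) != 0) :
  [/\ a 0 + a 1 + a 2 = 0, b 0 + b 1 + b 2 = 0,
      a 0 / x 0 + a 1 / x 1 + a 2 / x 2 = 0 &
      (b 0 - (- 1%:R) * a 0) / (y 0 + a 0 / x 0 * ((- 1%:R) * u)) + (b 1 - (- 1%:R) * a 1) / (y 1 + a 1 / x 1 * ((- 1%:R) * u)) + (b 2 - (- 1%:R) * a 2) / (y 2 + a 2 / x 2 * ((- 1%:R) * u)) = 0].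
Proof.
have eP := stepP hx hy nx nq.
have ex := stepX hx hy nx nq.
have ca1 : a 1 = (((1%:R)) * b 0) by rewrite ha ; ring.
have cb1 : b 1 = (((- 1%:R)) * a 0 + ((- 1%:R)) * b 0) by rewrite hb ; ring.
have cP1 : x 1 * y 1 = ((((1%:R) * u)) * b 0 + ((1%:R)) * (x 0 * y 0)) by rewrite eP ; ring.
have cx1 : x 1 = x 0 * ((((1%:R) * u)) * b 0 + ((1%:R)) * (x 0 * y 0)) / ((x 0 * y 0) + ((- 1%:R) * u) * a 0) by rewrite (ex 0) cP1 .
have ca2 : a 2 = (((- 1%:R)) * a 0 + ((- 1%:R)) * b 0) by rewrite ha ca1 cb1; ring.
have cb2 : b 2 = (((1%:R)) * a 0) by rewrite hb ca1 cb1; ring.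
have cP2 : x 2 * y 2 = ((((- 1%:R) * u)) * a 0 + ((1%:R)) * (x 0 * y 0)) by rewrite eP cP1 ca1 cb1; ring.
have cx2 : x 2 = x 0 * ((((1%:R) * u)) * b 0 + ((1%:R)) * (x 0 * y 0)) / ((x 0 * y 0) + ((- 1%:R) * u) * a 0) * ((((- 1%:R) * u)) * a 0 + ((1%:R)) * (x 0 * y 0)) / (((((1%:R) * u)) * b 0 + ((1%:R)) * (x 0 * y 0)) + ((- 1%:R) * u) * (((1%:R)) * b 0)) by rewrite (ex 1) cP2 cP1 ca1 cx1.
have nP0 : x 0 * y 0 != 0 by exact: mulf_neq0.
have nQ0 : ((x 0 * y 0) + ((- 1%:R) * u) * a 0) != 0 by rewrite -(eqQ _ _ _ (nx 0)); exact: mulf_neq0.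
have nP1 : ((((1%:R) * u)) * b 0 + ((1%:R)) * (x 0 * y 0)) != 0 by rewrite -cP1; exact: mulf_neq0.
have nQ1 : (((((1%:R) * u)) * b 0 + ((1%:R)) * (x 0 * y 0)) + ((- 1%:R) * u) * (((1%:R)) * b 0)) != 0 by rewrite -cP1 -ca1 -(eqQ _ _ _ (nx 1)); exact: mulf_neq0.
have nP2 : ((((- 1%:R) * u)) * a 0 + ((1%:R)) * (x 0 * y 0)) != 0 by rewrite -cP2; exact: mulf_neq0.
have nQ2 : (((((- 1%:R) * u)) * a 0 + ((1%:R)) * (x 0 * y 0)) + ((- 1%:R) * u) * (((- 1%:R)) * a 0 + ((- 1%:R)) * b 0)) != 0 by rewrite -cP2 -ca2 -(eqQ _ _ _ (nx 2)); exact: mulf_neq0.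
have nx0 := nx 0. have ny0 := ny 0.
split.
- rewrite ca1 ca2; ring.
- rewrite cb1 cb2; ring.
- rewrite ca1 ca2 cx1 cx2; field; nzt.
- rewrite (eqYQ _ _ _ (nx 0)) (eqYQ _ _ _ (nx 1)) (eqYQ _ _ _ (nx 2)).
  rewrite cP1 cP2 ca1 ca2 cb1 cb2 cx1 cx2; field; nzt.
Qed.

Lemma caseB2a (F : fieldType) (a b x y : nat -> F) (u : F)
  (h2 : (2%:R : F) != 0) (h3 : (3%:R : F) != 0)
  (ha : forall t, a t.+1 = - a t - (- 1%:R) * (b t - (- 2%:R) * a t))
  (hb : forall t, b t.+1 = - (b t - (- 2%:R) * a t))
  (hx : forall t, x t.+1 = x t + (b t - (- 2%:R) * a t) / (y t + a t / x t * ((- 1%:R) * u)) * u)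
  (hy : forall t, y t.+1 = y t + a t / x t * ((- 1%:R) * u))
  (nx : forall t, x t != 0) (ny : forall t, y t != 0)
  (nq : forall t, y t + a t / x t * ((- 1%:R) * u) != 0) :
  [/\ a 0 + a 1 + a 2 + a 3 = 0, b 0 + b 1 + b 2 + b 3 = 0,
      a 0 / x 0 + a 1 / x 1 + a 2 / x 2 + a 3 / x 3 = 0 &
      (b 0 - (- 2%:R) * a 0) / (y 0 + a 0 / x 0 * ((- 1%:R) * u)) + (b 1 - (- 2%:R) * a 1) / (y 1 + a 1 / x 1 * ((- 1%:R) * u)) + (b 2 - (- 2%:R) * a 2) / (y 2 + a 2 / x 2 * ((- 1%:R) * u)) + (b 3 - (- 2%:R) * a 3) / (y 3 + a 3 / x 3 * ((- 1%:R) * u)) = 0].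
Proof.
have eP := stepP hx hy nx nq.
have ex := stepX hx hy nx nq.
have ca1 : a 1 = (((1%:R)) * a 0 + ((1%:R)) * b 0) by rewrite ha ; ring.
have cb1 : b 1 = (((- 2%:R)) * a 0 + ((- 1%:R)) * b 0) by rewrite hb ; ring.
have cP1 : x 1 * y 1 = ((((1%:R) * u)) * a 0 + (((1%:R) * u)) * b 0 + ((1%:R)) * (x 0 * y 0)) by rewrite eP ; ring.
have cx1 : x 1 = x 0 * ((((1%:R) * u)) * a 0 + (((1%:R) * u)) * b 0 + ((1%:R)) * (x 0 * y 0)) / ((x 0 * y 0) + ((- 1%:R) * u) * a 0) by rewrite (ex 0) cP1 .
have ca2 : a 2 = (((- 1%:R)) * a 0) by rewrite ha ca1 cb1; ring.
have cb2 : b 2 = (((- 1%:R)) * b 0) by rewrite hb ca1 cb1; ring.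
have cP2 : x 2 * y 2 = ((((1%:R) * u)) * b 0 + ((1%:R)) * (x 0 * y 0)) by rewrite eP cP1 ca1 cb1; ring.
have cx2 : x 2 = x 0 * ((((1%:R) * u)) * a 0 + (((1%:R) * u)) * b 0 + ((1%:R)) * (x 0 * y 0)) / ((x 0 * y 0) + ((- 1%:R) * u) * a 0) * ((((1%:R) * u)) * b 0 + ((1%:R)) * (x 0 * y 0)) / (((((1%:R) * u)) * a 0 + (((1%:R) * u)) * b 0 + ((1%:R)) * (x 0 * y 0)) + ((- 1%:R) * u) * (((1%:R)) * a 0 + ((1%:R)) * b 0)) by rewrite (ex 1) cP2 cP1 ca1 cx1.
have ca3 : a 3 = (((- 1%:R)) * a 0 + ((- 1%:R)) * b 0) by rewrite ha ca2 cb2; ring.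
have cb3 : b 3 = (((2%:R)) * a 0 + ((1%:R)) * b 0) by rewrite hb ca2 cb2; ring.
have cP3 : x 3 * y 3 = ((((- 1%:R) * u)) * a 0 + ((1%:R)) * (x 0 * y 0)) by rewrite eP cP2 ca2 cb2; ring.
have cx3 : x 3 = x 0 * ((((1%:R) * u)) * a 0 + (((1%:R) * u)) * b 0 + ((1%:R)) * (x 0 * y 0)) / ((x 0 * y 0) + ((- 1%:R) * u) * a 0) * ((((1%:R) * u)) * b 0 + ((1%:R)) * (x 0 * y 0)) / (((((1%:R) * u)) * a 0 + (((1%:R) * u)) * b 0 + ((1%:R)) * (x 0 * y 0)) + ((- 1%:R) * u) * (((1%:R)) * a 0 + ((1%:R)) * b 0)) * ((((- 1%:R) * u)) * a 0 + ((1%:R)) * (x 0 * y 0)) / (((((1%:R) * u)) * b 0 + ((1%:R)) * (x 0 * y 0)) + ((- 1%:R) * u) * (((- 1%:R)) * a 0)) by rewrite (ex 2) cP3 cP2 ca2 cx2.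
have nP0 : x 0 * y 0 != 0 by exact: mulf_neq0.
have nQ0 : ((x 0 * y 0) + ((- 1%:R) * u) * a 0) != 0 by rewrite -(eqQ _ _ _ (nx 0)); exact: mulf_neq0.
have nP1 : ((((1%:R) * u)) * a 0 + (((1%:R) * u)) * b 0 + ((1%:R)) * (x 0 * y 0)) != 0 by rewrite -cP1; exact: mulf_neq0.
have nQ1 : (((((1%:R) * u)) * a 0 + (((1%:R) * u)) * b 0 + ((1%:R)) * (x 0 * y 0)) + ((- 1%:R) * u) * (((1%:R)) * a 0 + ((1%:R)) * b 0)) != 0 by rewrite -cP1 -ca1 -(eqQ _ _ _ (nx 1)); exact: mulf_neq0.
have nP2 : ((((1%:R) * u)) * b 0 + ((1%:R)) * (x 0 * y 0)) != 0 by rewrite -cP2; exact: mulf_neq0.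
have nQ2 : (((((1%:R) * u)) * b 0 + ((1%:R)) * (x 0 * y 0)) + ((- 1%:R) * u) * (((- 1%:R)) * a 0)) != 0 by rewrite -cP2 -ca2 -(eqQ _ _ _ (nx 2)); exact: mulf_neq0.
have nP3 : ((((- 1%:R) * u)) * a 0 + ((1%:R)) * (x 0 * y 0)) != 0 by rewrite -cP3; exact: mulf_neq0.
have nQ3 : (((((- 1%:R) * u)) * a 0 + ((1%:R)) * (x 0 * y 0)) + ((- 1%:R) * u) * (((- 1%:R)) * a 0 + ((- 1%:R)) * b 0)) != 0 by rewrite -cP3 -ca3 -(eqQ _ _ _ (nx 3)); exact: mulf_neq0.
have nx0 := nx 0. have ny0 := ny 0.
split.
- rewrite ca1 ca2 ca3; ring.
- rewrite cb1 cb2 cb3; ring.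
- rewrite ca1 ca2 ca3 cx1 cx2 cx3; field; nzt.
- rewrite (eqYQ _ _ _ (nx 0)) (eqYQ _ _ _ (nx 1)) (eqYQ _ _ _ (nx 2)) (eqYQ _ _ _ (nx 3)).
  rewrite cP1 cP2 cP3 ca1 ca2 ca3 cb1 cb2 cb3 cx1 cx2 cx3; field; nzt.
Qed.

Lemma caseB2b (F : fieldType) (a b x y : nat -> F) (u : F)
  (h2 : (2%:R : F) != 0) (h3 : (3%:R : F) != 0)
  (ha : forall t, a t.+1 = - a t - (- 1%:R) * (b t - (- 2%:R) * a t))
  (hb : forall t, b t.+1 = - (b t - (- 2%:R) * a t))
  (hx : forall t, x t.+1 = x t + (b t - (- 2%:R) * a t) / (y t + a t / x t * ((- 2%:R) * u)) * u)
  (hy : forall t, y t.+1 = y t + a t / x t * ((- 2%:R) * u))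
  (nx : forall t, x t != 0) (ny : forall t, y t != 0)
  (nq : forall t, y t + a t / x t * ((- 2%:R) * u) != 0) :
  [/\ a 0 + a 1 + a 2 + a 3 = 0, b 0 + b 1 + b 2 + b 3 = 0,
      a 0 / x 0 + a 1 / x 1 + a 2 / x 2 + a 3 / x 3 = 0 &
      (b 0 - (- 2%:R) * a 0) / (y 0 + a 0 / x 0 * ((- 2%:R) * u)) + (b 1 - (- 2%:R) * a 1) / (y 1 + a 1 / x 1 * ((- 2%:R) * u)) + (b 2 - (- 2%:R) * a 2) / (y 2 + a 2 / x 2 * ((- 2%:R) * u)) + (b 3 - (- 2%:R) * a 3) / (y 3 + a 3 / x 3 * ((- 2%:R) * u)) = 0].
Proof.
have eP := stepP hx hy nx nq.
have ex := stepX hx hy nx nq.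
have ca1 : a 1 = (((1%:R)) * a 0 + ((1%:R)) * b 0) by rewrite ha ; ring.
have cb1 : b 1 = (((- 2%:R)) * a 0 + ((- 1%:R)) * b 0) by rewrite hb ; ring.
have cP1 : x 1 * y 1 = ((((1%:R) * u)) * b 0 + ((1%:R)) * (x 0 * y 0)) by rewrite eP ; ring.
have cx1 : x 1 = x 0 * ((((1%:R) * u)) * b 0 + ((1%:R)) * (x 0 * y 0)) / ((x 0 * y 0) + ((- 2%:R) * u) * a 0) by rewrite (ex 0) cP1 .
have ca2 : a 2 = (((- 1%:R)) * a 0) by rewrite ha ca1 cb1; ring.
have cb2 : b 2 = (((- 1%:R)) * b 0) by rewrite hb ca1 cb1; ring.
have cP2 : x 2 * y 2 = ((((- 2%:R) * u)) * a 0 + ((1%:R)) * (x 0 * y 0)) by rewrite eP cP1 ca1 cb1; ring.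
have cx2 : x 2 = x 0 * ((((1%:R) * u)) * b 0 + ((1%:R)) * (x 0 * y 0)) / ((x 0 * y 0) + ((- 2%:R) * u) * a 0) * ((((- 2%:R) * u)) * a 0 + ((1%:R)) * (x 0 * y 0)) / (((((1%:R) * u)) * b 0 + ((1%:R)) * (x 0 * y 0)) + ((- 2%:R) * u) * (((1%:R)) * a 0 + ((1%:R)) * b 0)) by rewrite (ex 1) cP2 cP1 ca1 cx1.
have ca3 : a 3 = (((- 1%:R)) * a 0 + ((- 1%:R)) * b 0) by rewrite ha ca2 cb2; ring.
have cb3 : b 3 = (((2%:R)) * a 0 + ((1%:R)) * b 0) by rewrite hb ca2 cb2; ring.
have cP3 : x 3 * y 3 = ((((- 2%:R) * u)) * a 0 + (((- 1%:R) * u)) * b 0 + ((1%:R)) * (x 0 * y 0)) by rewrite eP cP2 ca2 cb2; ring.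
have cx3 : x 3 = x 0 * ((((1%:R) * u)) * b 0 + ((1%:R)) * (x 0 * y 0)) / ((x 0 * y 0) + ((- 2%:R) * u) * a 0) * ((((- 2%:R) * u)) * a 0 + ((1%:R)) * (x 0 * y 0)) / (((((1%:R) * u)) * b 0 + ((1%:R)) * (x 0 * y 0)) + ((- 2%:R) * u) * (((1%:R)) * a 0 + ((1%:R)) * b 0)) * ((((- 2%:R) * u)) * a 0 + (((- 1%:R) * u)) * b 0 + ((1%:R)) * (x 0 * y 0)) / (((((- 2%:R) * u)) * a 0 + ((1%:R)) * (x 0 * y 0)) + ((- 2%:R) * u) * (((- 1%:R)) * a 0)) by rewrite (ex 2) cP3 cP2 ca2 cx2.
have nP0 : x 0 * y 0 != 0 by exact: mulf_neq0.
have nQ0 : ((x 0 * y 0) + ((- 2%:R) * u) * a 0) != 0 by rewrite -(eqQ _ _ _ (nx 0)); exact: mulf_neq0.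
have nP1 : ((((1%:R) * u)) * b 0 + ((1%:R)) * (x 0 * y 0)) != 0 by rewrite -cP1; exact: mulf_neq0.
have nQ1 : (((((1%:R) * u)) * b 0 + ((1%:R)) * (x 0 * y 0)) + ((- 2%:R) * u) * (((1%:R)) * a 0 + ((1%:R)) * b 0)) != 0 by rewrite -cP1 -ca1 -(eqQ _ _ _ (nx 1)); exact: mulf_neq0.
have nP2 : ((((- 2%:R) * u)) * a 0 + ((1%:R)) * (x 0 * y 0)) != 0 by rewrite -cP2; exact: mulf_neq0.
have nQ2 : (((((- 2%:R) * u)) * a 0 + ((1%:R)) * (x 0 * y 0)) + ((- 2%:R) * u) * (((- 1%:R)) * a 0)) != 0 by rewrite -cP2 -ca2 -(eqQ _ _ _ (nx 2)); exact: mulf_neq0.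
have nP3 : ((((- 2%:R) * u)) * a 0 + (((- 1%:R) * u)) * b 0 + ((1%:R)) * (x 0 * y 0)) != 0 by rewrite -cP3; exact: mulf_neq0.
have nQ3 : (((((- 2%:R) * u)) * a 0 + (((- 1%:R) * u)) * b 0 + ((1%:R)) * (x 0 * y 0)) + ((- 2%:R) * u) * (((- 1%:R)) * a 0 + ((- 1%:R)) * b 0)) != 0 by rewrite -cP3 -ca3 -(eqQ _ _ _ (nx 3)); exact: mulf_neq0.
have nx0 := nx 0. have ny0 := ny 0.
split.
- rewrite ca1 ca2 ca3; ring.
- rewrite cb1 cb2 cb3; ring.
- rewrite ca1 ca2 ca3 cx1 cx2 cx3; field; nzt.
- rewrite (eqYQ _ _ _ (nx 0)) (eqYQ _ _ _ (nx 1)) (eqYQ _ _ _ (nx 2)) (eqYQ _ _ _ (nx 3)).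
  rewrite cP1 cP2 cP3 ca1 ca2 ca3 cb1 cb2 cb3 cx1 cx2 cx3; field; nzt.
Qed.

Lemma caseG2a (F : fieldType) (a b x y : nat -> F) (u : F)
  (h2 : (2%:R : F) != 0) (h3 : (3%:R : F) != 0)
  (ha : forall t, a t.+1 = - a t - (- 1%:R) * (b t - (- 3%:R) * a t))
  (hb : forall t, b t.+1 = - (b t - (- 3%:R) * a t))
  (hx : forall t, x t.+1 = x t + (b t - (- 3%:R) * a t) / (y t + a t / x t * ((- 1%:R) * u)) * u)
  (hy : forall t, y t.+1 = y t + a t / x t * ((- 1%:R) * u))
  (nx : forall t, x t != 0) (ny : forall t, y t != 0)
  (nq : forall t, y t + a t / x t * ((- 1%:R) * u) != 0) :
  [/\ a 0 + a 1 + a 2 + a 3 + a 4 + a 5 = 0, b 0 + b 1 + b 2 + b 3 + b 4 + b 5 = 0,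
      a 0 / x 0 + a 1 / x 1 + a 2 / x 2 + a 3 / x 3 + a 4 / x 4 + a 5 / x 5 = 0 &
      (b 0 - (- 3%:R) * a 0) / (y 0 + a 0 / x 0 * ((- 1%:R) * u)) + (b 1 - (- 3%:R) * a 1) / (y 1 + a 1 / x 1 * ((- 1%:R) * u)) + (b 2 - (- 3%:R) * a 2) / (y 2 + a 2 / x 2 * ((- 1%:R) * u)) + (b 3 - (- 3%:R) * a 3) / (y 3 + a 3 / x 3 * ((- 1%:R) * u)) + (b 4 - (- 3%:R) * a 4) / (y 4 + a 4 / x 4 * ((- 1%:R) * u)) + (b 5 - (- 3%:R) * a 5) / (y 5 + a 5 / x 5 * ((- 1%:R) * u)) = 0].
Proof.
have eP := stepP hx hy nx nq.
have ex := stepX hx hy nx nq.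
have ca1 : a 1 = (((2%:R)) * a 0 + ((1%:R)) * b 0) by rewrite ha ; ring.
have cb1 : b 1 = (((- 3%:R)) * a 0 + ((- 1%:R)) * b 0) by rewrite hb ; ring.
have cP1 : x 1 * y 1 = ((((2%:R) * u)) * a 0 + (((1%:R) * u)) * b 0 + ((1%:R)) * (x 0 * y 0)) by rewrite eP ; ring.
have cx1 : x 1 = x 0 * ((((2%:R) * u)) * a 0 + (((1%:R) * u)) * b 0 + ((1%:R)) * (x 0 * y 0)) / ((x 0 * y 0) + ((- 1%:R) * u) * a 0) by rewrite (ex 0) cP1 .
have ca2 : a 2 = (((1%:R)) * a 0 + ((1%:R)) * b 0) by rewrite ha ca1 cb1; ring.
have cb2 : b 2 = (((- 3%:R)) * a 0 + ((- 2%:R)) * b 0) by rewrite hb ca1 cb1; ring.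
have cP2 : x 2 * y 2 = ((((3%:R) * u)) * a 0 + (((2%:R) * u)) * b 0 + ((1%:R)) * (x 0 * y 0)) by rewrite eP cP1 ca1 cb1; ring.
have cx2 : x 2 = x 0 * ((((2%:R) * u)) * a 0 + (((1%:R) * u)) * b 0 + ((1%:R)) * (x 0 * y 0)) / ((x 0 * y 0) + ((- 1%:R) * u) * a 0) * ((((3%:R) * u)) * a 0 + (((2%:R) * u)) * b 0 + ((1%:R)) * (x 0 * y 0)) / (((((2%:R) * u)) * a 0 + (((1%:R) * u)) * b 0 + ((1%:R)) * (x 0 * y 0)) + ((- 1%:R) * u) * (((2%:R)) * a 0 + ((1%:R)) * b 0)) by rewrite (ex 1) cP2 cP1 ca1 cx1.
have ca3 : a 3 = (((- 1%:R)) * a 0) by rewrite ha ca2 cb2; ring.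
have cb3 : b 3 = (((- 1%:R)) * b 0) by rewrite hb ca2 cb2; ring.
have cP3 : x 3 * y 3 = ((((2%:R) * u)) * a 0 + (((2%:R) * u)) * b 0 + ((1%:R)) * (x 0 * y 0)) by rewrite eP cP2 ca2 cb2; ring.
have cx3 : x 3 = x 0 * ((((2%:R) * u)) * a 0 + (((1%:R) * u)) * b 0 + ((1%:R)) * (x 0 * y 0)) / ((x 0 * y 0) + ((- 1%:R) * u) * a 0) * ((((3%:R) * u)) * a 0 + (((2%:R) * u)) * b 0 + ((1%:R)) * (x 0 * y 0)) / (((((2%:R) * u)) * a 0 + (((1%:R) * u)) * b 0 + ((1%:R)) * (x 0 * y 0)) + ((- 1%:R) * u) * (((2%:R)) * a 0 + ((1%:R)) * b 0)) * ((((2%:R) * u)) * a 0 + (((2%:R) * u)) * b 0 + ((1%:R)) * (x 0 * y 0)) / (((((3%:R) * u)) * a 0 + (((2%:R) * u)) * b 0 + ((1%:R)) * (x 0 * y 0)) + ((- 1%:R) * u) * (((1%:R)) * a 0 + ((1%:R)) * b 0)) by rewrite (ex 2) cP3 cP2 ca2 cx2.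
have ca4 : a 4 = (((- 2%:R)) * a 0 + ((- 1%:R)) * b 0) by rewrite ha ca3 cb3; ring.
have cb4 : b 4 = (((3%:R)) * a 0 + ((1%:R)) * b 0) by rewrite hb ca3 cb3; ring.
have cP4 : x 4 * y 4 = ((((1%:R) * u)) * b 0 + ((1%:R)) * (x 0 * y 0)) by rewrite eP cP3 ca3 cb3; ring.
have cx4 : x 4 = x 0 * ((((2%:R) * u)) * a 0 + (((1%:R) * u)) * b 0 + ((1%:R)) * (x 0 * y 0)) / ((x 0 * y 0) + ((- 1%:R) * u) * a 0) * ((((3%:R) * u)) * a 0 + (((2%:R) * u)) * b 0 + ((1%:R)) * (x 0 * y 0)) / (((((2%:R) * u)) * a 0 + (((1%:R) * u)) * b 0 + ((1%:R)) * (x 0 * y 0)) + ((- 1%:R) * u) * (((2%:R)) * a 0 + ((1%:R)) * b 0)) * ((((2%:R) * u)) * a 0 + (((2%:R) * u)) * b 0 + ((1%:R)) * (x 0 * y 0)) / (((((3%:R) * u)) * a 0 + (((2%:R) * u)) * b 0 + ((1%:R)) * (x 0 * y 0)) + ((- 1%:R) * u) * (((1%:R)) * a 0 + ((1%:R)) * b 0)) * ((((1%:R) * u)) * b 0 + ((1%:R)) * (x 0 * y 0)) / (((((2%:R) * u)) * a 0 + (((2%:R) * u)) * b 0 + ((1%:R)) * (x 0 * y 0)) + ((- 1%:R) * u) * (((- 1%:R)) * a 0)) by rewrite (ex 3) cP4 cP3 ca3 cx3.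
have ca5 : a 5 = (((- 1%:R)) * a 0 + ((- 1%:R)) * b 0) by rewrite ha ca4 cb4; ring.
have cb5 : b 5 = (((3%:R)) * a 0 + ((2%:R)) * b 0) by rewrite hb ca4 cb4; ring.
have cP5 : x 5 * y 5 = ((((- 1%:R) * u)) * a 0 + ((1%:R)) * (x 0 * y 0)) by rewrite eP cP4 ca4 cb4; ring.
have cx5 : x 5 = x 0 * ((((2%:R) * u)) * a 0 + (((1%:R) * u)) * b 0 + ((1%:R)) * (x 0 * y 0)) / ((x 0 * y 0) + ((- 1%:R) * u) * a 0) * ((((3%:R) * u)) * a 0 + (((2%:R) * u)) * b 0 + ((1%:R)) * (x 0 * y 0)) / (((((2%:R) * u)) * a 0 + (((1%:R) * u)) * b 0 + ((1%:R)) * (x 0 * y 0)) + ((- 1%:R) * u) * (((2%:R)) * a 0 + ((1%:R)) * b 0)) * ((((2%:R) * u)) * a 0 + (((2%:R) * u)) * b 0 + ((1%:R)) * (x 0 * y 0)) / (((((3%:R) * u)) * a 0 + (((2%:R) * u)) * b 0 + ((1%:R)) * (x 0 * y 0)) + ((- 1%:R) * u) * (((1%:R)) * a 0 + ((1%:R)) * b 0)) * ((((1%:R) * u)) * b 0 + ((1%:R)) * (x 0 * y 0)) / (((((2%:R) * u)) * a 0 + (((2%:R) * u)) * b 0 + ((1%:R)) * (x 0 * y 0)) + ((- 1%:R) * u) * (((- 1%:R)) * a 0)) * ((((- 1%:R) * u)) * a 0 + ((1%:R)) * (x 0 * y 0)) / (((((1%:R) * u)) * b 0 + ((1%:R)) *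 (x 0 * y 0)) + ((- 1%:R) * u) * (((- 2%:R)) * a 0 + ((- 1%:R)) * b 0)) by rewrite (ex 4) cP5 cP4 ca4 cx4.
have nP0 : x 0 * y 0 != 0 by exact: mulf_neq0.
have nQ0 : ((x 0 * y 0) + ((- 1%:R) * u) * a 0) != 0 by rewrite -(eqQ _ _ _ (nx 0)); exact: mulf_neq0.
have nP1 : ((((2%:R) * u)) * a 0 + (((1%:R) * u)) * b 0 + ((1%:R)) * (x 0 * y 0)) != 0 by rewrite -cP1; exact: mulf_neq0.
have nQ1 : (((((2%:R) * u)) * a 0 + (((1%:R) * u)) * b 0 + ((1%:R)) * (x 0 * y 0)) + ((- 1%:R) * u) * (((2%:R)) * a 0 + ((1%:R)) * b 0)) != 0 by rewrite -cP1 -ca1 -(eqQ _ _ _ (nx 1)); exact: mulf_neq0.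
have nP2 : ((((3%:R) * u)) * a 0 + (((2%:R) * u)) * b 0 + ((1%:R)) * (x 0 * y 0)) != 0 by rewrite -cP2; exact: mulf_neq0.
have nQ2 : (((((3%:R) * u)) * a 0 + (((2%:R) * u)) * b 0 + ((1%:R)) * (x 0 * y 0)) + ((- 1%:R) * u) * (((1%:R)) * a 0 + ((1%:R)) * b 0)) != 0 by rewrite -cP2 -ca2 -(eqQ _ _ _ (nx 2)); exact: mulf_neq0.
have nP3 : ((((2%:R) * u)) * a 0 + (((2%:R) * u)) * b 0 + ((1%:R)) * (x 0 * y 0)) != 0 by rewrite -cP3; exact: mulf_neq0.
have nQ3 : (((((2%:R) * u)) * a 0 + (((2%:R) * u)) * b 0 + ((1%:R)) * (x 0 * y 0)) + ((- 1%:R) * u) * (((- 1%:R)) * a 0)) != 0 by rewrite -cP3 -ca3 -(eqQ _ _ _ (nx 3)); exact: mulf_neq0.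
have nP4 : ((((1%:R) * u)) * b 0 + ((1%:R)) * (x 0 * y 0)) != 0 by rewrite -cP4; exact: mulf_neq0.
have nQ4 : (((((1%:R) * u)) * b 0 + ((1%:R)) * (x 0 * y 0)) + ((- 1%:R) * u) * (((- 2%:R)) * a 0 + ((- 1%:R)) * b 0)) != 0 by rewrite -cP4 -ca4 -(eqQ _ _ _ (nx 4)); exact: mulf_neq0.
have nP5 : ((((- 1%:R) * u)) * a 0 + ((1%:R)) * (x 0 * y 0)) != 0 by rewrite -cP5; exact: mulf_neq0.
have nQ5 : (((((- 1%:R) * u)) * a 0 + ((1%:R)) * (x 0 * y 0)) + ((- 1%:R) * u) * (((- 1%:R)) * a 0 + ((- 1%:R)) * b 0)) != 0 by rewrite -cP5 -ca5 -(eqQ _ _ _ (nx 5)); exact: mulf_neq0.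
have nx0 := nx 0. have ny0 := ny 0.
split.
- rewrite ca1 ca2 ca3 ca4 ca5; ring.
- rewrite cb1 cb2 cb3 cb4 cb5; ring.
- rewrite ca1 ca2 ca3 ca4 ca5 cx1 cx2 cx3 cx4 cx5; field; nzt.
- rewrite (eqYQ _ _ _ (nx 0)) (eqYQ _ _ _ (nx 1)) (eqYQ _ _ _ (nx 2)) (eqYQ _ _ _ (nx 3)) (eqYQ _ _ _ (nx 4)) (eqYQ _ _ _ (nx 5)).
  rewrite cP1 cP2 cP3 cP4 cP5 ca1 ca2 ca3 ca4 ca5 cb1 cb2 cb3 cb4 cb5 cx1 cx2 cx3 cx4 cx5; field; nzt.
Qed.

Lemma caseG2b (F : fieldType) (a b x y : nat -> F) (u : F)
  (h2 : (2%:R : F) != 0) (h3 : (3%:R : F) != 0)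
  (ha : forall t, a t.+1 = - a t - (- 1%:R) * (b t - (- 3%:R) * a t))
  (hb : forall t, b t.+1 = - (b t - (- 3%:R) * a t))
  (hx : forall t, x t.+1 = x t + (b t - (- 3%:R) * a t) / (y t + a t / x t * ((- 3%:R) * u)) * ((2%:R) * u))
  (hy : forall t, y t.+1 = y t + a t / x t * ((- 3%:R) * u))
  (nx : forall t, x t != 0) (ny : forall t, y t != 0)
  (nq : forall t, y t + a t / x t * ((- 3%:R) * u) != 0) :
  [/\ a 0 + a 1 + a 2 + a 3 + a 4 + a 5 = 0, b 0 + b 1 + b 2 + b 3 + b 4 + b 5 = 0,
      a 0 / x 0 + a 1 / x 1 + a 2 / x 2 + a 3 / x 3 + a 4 / x 4 + a 5 / x 5 = 0 &
      (b 0 - (- 3%:R) * a 0) / (y 0 + a 0 / x 0 * ((- 3%:R) * u)) + (b 1 - (- 3%:R) * a 1) / (y 1 + a 1 / x 1 * ((- 3%:R) * u)) + (b 2 - (- 3%:R) * a 2) / (y 2 + a 2 / x 2 * ((- 3%:R) * u)) + (b 3 - (- 3%:R) * a 3) / (y 3 + a 3 / x 3 * ((- 3%:R) * u)) + (b 4 - (- 3%:R) * a 4) / (y 4 + a 4 / x 4 * ((- 3%:R) * u)) + (b 5 - (- 3%:R) * a 5) / (y 5 + a 5 / x 5 * ((- 3%:R) * u)) = 0].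
Proof.
have eP := stepP hx hy nx nq.
have ex := stepX hx hy nx nq.
have ca1 : a 1 = (((2%:R)) * a 0 + ((1%:R)) * b 0) by rewrite ha ; ring.
have cb1 : b 1 = (((- 3%:R)) * a 0 + ((- 1%:R)) * b 0) by rewrite hb ; ring.
have cP1 : x 1 * y 1 = ((((3%:R) * u)) * a 0 + (((2%:R) * u)) * b 0 + ((1%:R)) * (x 0 * y 0)) by rewrite eP ; ring.
have cx1 : x 1 = x 0 * ((((3%:R) * u)) * a 0 + (((2%:R) * u)) * b 0 + ((1%:R)) * (x 0 * y 0)) / ((x 0 * y 0) + ((- 3%:R) * u) * a 0) by rewrite (ex 0) cP1 .
have ca2 : a 2 = (((1%:R)) * a 0 + ((1%:R)) * b 0) by rewrite ha ca1 cb1; ring.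
have cb2 : b 2 = (((- 3%:R)) * a 0 + ((- 2%:R)) * b 0) by rewrite hb ca1 cb1; ring.
have cP2 : x 2 * y 2 = ((((3%:R) * u)) * a 0 + (((3%:R) * u)) * b 0 + ((1%:R)) * (x 0 * y 0)) by rewrite eP cP1 ca1 cb1; ring.
have cx2 : x 2 = x 0 * ((((3%:R) * u)) * a 0 + (((2%:R) * u)) * b 0 + ((1%:R)) * (x 0 * y 0)) / ((x 0 * y 0) + ((- 3%:R) * u) * a 0) * ((((3%:R) * u)) * a 0 + (((3%:R) * u)) * b 0 + ((1%:R)) * (x 0 * y 0)) / (((((3%:R) * u)) * a 0 + (((2%:R) * u)) * b 0 + ((1%:R)) * (x 0 * y 0)) + ((- 3%:R) * u) * (((2%:R)) * a 0 + ((1%:R)) * b 0)) by rewrite (ex 1) cP2 cP1 ca1 cx1.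
have ca3 : a 3 = (((- 1%:R)) * a 0) by rewrite ha ca2 cb2; ring.
have cb3 : b 3 = (((- 1%:R)) * b 0) by rewrite hb ca2 cb2; ring.
have cP3 : x 3 * y 3 = ((((2%:R) * u)) * b 0 + ((1%:R)) * (x 0 * y 0)) by rewrite eP cP2 ca2 cb2; ring.
have cx3 : x 3 = x 0 * ((((3%:R) * u)) * a 0 + (((2%:R) * u)) * b 0 + ((1%:R)) * (x 0 * y 0)) / ((x 0 * y 0) + ((- 3%:R) * u) * a 0) * ((((3%:R) * u)) * a 0 + (((3%:R) * u)) * b 0 + ((1%:R)) * (x 0 * y 0)) / (((((3%:R) * u)) * a 0 + (((2%:R) * u)) * b 0 + ((1%:R)) * (x 0 * y 0)) + ((- 3%:R) * u) * (((2%:R)) * a 0 + ((1%:R)) * b 0)) * ((((2%:R) * u)) * b 0 + ((1%:R)) * (x 0 * y 0)) / (((((3%:R) * u)) * a 0 + (((3%:R) * u)) * b 0 + ((1%:R)) * (x 0 * y 0)) + ((- 3%:R) * u) * (((1%:R)) * a 0 + ((1%:R)) * b 0)) by rewrite (ex 2) cP3 cP2 ca2 cx2.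
have ca4 : a 4 = (((- 2%:R)) * a 0 + ((- 1%:R)) * b 0) by rewrite ha ca3 cb3; ring.
have cb4 : b 4 = (((3%:R)) * a 0 + ((1%:R)) * b 0) by rewrite hb ca3 cb3; ring.
have cP4 : x 4 * y 4 = ((((- 3%:R) * u)) * a 0 + ((1%:R)) * (x 0 * y 0)) by rewrite eP cP3 ca3 cb3; ring.
have cx4 : x 4 = x 0 * ((((3%:R) * u)) * a 0 + (((2%:R) * u)) * b 0 + ((1%:R)) * (x 0 * y 0)) / ((x 0 * y 0) + ((- 3%:R) * u) * a 0) * ((((3%:R) * u)) * a 0 + (((3%:R) * u)) * b 0 + ((1%:R)) * (x 0 * y 0)) / (((((3%:R) * u)) * a 0 + (((2%:R) * u)) * b 0 + ((1%:R)) * (x 0 * y 0)) + ((- 3%:R) * u) * (((2%:R)) * a 0 + ((1%:R)) * b 0)) * ((((2%:R) * u)) * b 0 + ((1%:R)) * (x 0 * y 0)) / (((((3%:R) * u)) * a 0 + (((3%:R) * u)) * b 0 + ((1%:R)) * (x 0 * y 0)) + ((- 3%:R) * u) * (((1%:R)) * a 0 + ((1%:R)) * b 0)) * ((((- 3%:R) * u)) * a 0 + ((1%:R)) * (x 0 * y 0)) / (((((2%:R) * u)) * b 0 + ((1%:R)) * (x 0 * y 0)) + ((- 3%:R) * u) * (((- 1%:R)) * a 0)) by rewrite (ex 3) cP4 cP3 ca3 cx3.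
have ca5 : a 5 = (((- 1%:R)) * a 0 + ((- 1%:R)) * b 0) by rewrite ha ca4 cb4; ring.
have cb5 : b 5 = (((3%:R)) * a 0 + ((2%:R)) * b 0) by rewrite hb ca4 cb4; ring.
have cP5 : x 5 * y 5 = ((((- 3%:R) * u)) * a 0 + (((- 1%:R) * u)) * b 0 + ((1%:R)) * (x 0 * y 0)) by rewrite eP cP4 ca4 cb4; ring.
have cx5 : x 5 = x 0 * ((((3%:R) * u)) * a 0 + (((2%:R) * u)) * b 0 + ((1%:R)) * (x 0 * y 0)) / ((x 0 * y 0) + ((- 3%:R) * u) * a 0) * ((((3%:R) * u)) * a 0 + (((3%:R) * u)) * b 0 + ((1%:R)) * (x 0 * y 0)) / (((((3%:R) * u)) * a 0 + (((2%:R) * u)) * b 0 + ((1%:R)) * (x 0 * y 0)) + ((- 3%:R) * u) * (((2%:R)) * a 0 + ((1%:R)) * b 0)) * ((((2%:R) * u)) * b 0 + ((1%:R)) * (x 0 * y 0)) / (((((3%:R) * u)) * a 0 + (((3%:R) * u)) * b 0 + ((1%:R)) * (x 0 * y 0)) + ((- 3%:R) * u) * (((1%:R)) * a 0 + ((1%:R)) * b 0)) * ((((- 3%:R) * u)) * a 0 + ((1%:R)) * (x 0 * y 0)) / (((((2%:R) * u)) * b 0 + ((1%:R)) * (x 0 * y 0)) + ((- 3%:R) * u) * (((- 1%:R)) * a 0)) * ((((- 3%:R) * u)) * a 0 + (((- 1%:R) * u)) * b 0 + ((1%:R)) * (x 0 * y 0)) / (((((- 3%:R) * u)) * a 0 +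 ((1%:R)) * (x 0 * y 0)) + ((- 3%:R) * u) * (((- 2%:R)) * a 0 + ((- 1%:R)) * b 0)) by rewrite (ex 4) cP5 cP4 ca4 cx4.
have nP0 : x 0 * y 0 != 0 by exact: mulf_neq0.
have nQ0 : ((x 0 * y 0) + ((- 3%:R) * u) * a 0) != 0 by rewrite -(eqQ _ _ _ (nx 0)); exact: mulf_neq0.
have nP1 : ((((3%:R) * u)) * a 0 + (((2%:R) * u)) * b 0 + ((1%:R)) * (x 0 * y 0)) != 0 by rewrite -cP1; exact: mulf_neq0.
have nQ1 : (((((3%:R) * u)) * a 0 + (((2%:R) * u)) * b 0 + ((1%:R)) * (x 0 * y 0)) + ((- 3%:R) * u) * (((2%:R)) * a 0 + ((1%:R)) * b 0)) != 0 by rewrite -cP1 -ca1 -(eqQ _ _ _ (nx 1)); exact: mulf_neq0.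
have nP2 : ((((3%:R) * u)) * a 0 + (((3%:R) * u)) * b 0 + ((1%:R)) * (x 0 * y 0)) != 0 by rewrite -cP2; exact: mulf_neq0.
have nQ2 : (((((3%:R) * u)) * a 0 + (((3%:R) * u)) * b 0 + ((1%:R)) * (x 0 * y 0)) + ((- 3%:R) * u) * (((1%:R)) * a 0 + ((1%:R)) * b 0)) != 0 by rewrite -cP2 -ca2 -(eqQ _ _ _ (nx 2)); exact: mulf_neq0.
have nP3 : ((((2%:R) * u)) * b 0 + ((1%:R)) * (x 0 * y 0)) != 0 by rewrite -cP3; exact: mulf_neq0.
have nQ3 : (((((2%:R) * u)) * b 0 + ((1%:R)) * (x 0 * y 0)) + ((- 3%:R) * u) * (((- 1%:R)) * a 0)) != 0 by rewrite -cP3 -ca3 -(eqQ _ _ _ (nx 3)); exact: mulf_neq0.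
have nP4 : ((((- 3%:R) * u)) * a 0 + ((1%:R)) * (x 0 * y 0)) != 0 by rewrite -cP4; exact: mulf_neq0.
have nQ4 : (((((- 3%:R) * u)) * a 0 + ((1%:R)) * (x 0 * y 0)) + ((- 3%:R) * u) * (((- 2%:R)) * a 0 + ((- 1%:R)) * b 0)) != 0 by rewrite -cP4 -ca4 -(eqQ _ _ _ (nx 4)); exact: mulf_neq0.
have nP5 : ((((- 3%:R) * u)) * a 0 + (((- 1%:R) * u)) * b 0 + ((1%:R)) * (x 0 * y 0)) != 0 by rewrite -cP5; exact: mulf_neq0.
have nQ5 : (((((- 3%:R) * u)) * a 0 + (((- 1%:R) * u)) * b 0 + ((1%:R)) * (x 0 * y 0)) + ((- 3%:R) * u) * (((- 1%:R)) * a 0 + ((- 1%:R)) * b 0)) != 0 by rewrite -cP5 -ca5 -(eqQ _ _ _ (nx 5)); exact: mulf_neq0.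
have nx0 := nx 0. have ny0 := ny 0.
split.
- rewrite ca1 ca2 ca3 ca4 ca5; ring.
- rewrite cb1 cb2 cb3 cb4 cb5; ring.
- rewrite ca1 ca2 ca3 ca4 ca5 cx1 cx2 cx3 cx4 cx5; field; nzt.
- rewrite (eqYQ _ _ _ (nx 0)) (eqYQ _ _ _ (nx 1)) (eqYQ _ _ _ (nx 2)) (eqYQ _ _ _ (nx 3)) (eqYQ _ _ _ (nx 4)) (eqYQ _ _ _ (nx 5)).
  rewrite cP1 cP2 cP3 cP4 cP5 ca1 ca2 ca3 ca4 ca5 cb1 cb2 cb3 cb4 cb5 cx1 cx2 cx3 cx4 cx5; field; nzt.
Qed.

Lemma caseG2c (F : fieldType) (a b x y : nat -> F) (u : F)
  (h2 : (2%:R : F) != 0) (h3 : (3%:R : F) != 0)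
  (ha : forall t, a t.+1 = - a t - (- 1%:R) * (b t - (- 3%:R) * a t))
  (hb : forall t, b t.+1 = - (b t - (- 3%:R) * a t))
  (hx : forall t, x t.+1 = x t + (b t - (- 3%:R) * a t) / (y t + a t / x t * ((- 2%:R) * u)) * u)
  (hy : forall t, y t.+1 = y t + a t / x t * ((- 2%:R) * u))
  (nx : forall t, x t != 0) (ny : forall t, y t != 0)
  (nq : forall t, y t + a t / x t * ((- 2%:R) * u) != 0) :
  [/\ a 0 + a 1 + a 2 + a 3 + a 4 + a 5 = 0, b 0 + b 1 + b 2 + b 3 + b 4 + b 5 = 0,
      a 0 / x 0 + a 1 / x 1 + a 2 / x 2 + a 3 / x 3 + a 4 / x 4 + a 5 / x 5 = 0 &
      (b 0 - (- 3%:R) * a 0) / (y 0 + a 0 / x 0 * ((- 2%:R) * u)) + (b 1 - (- 3%:R) * a 1) / (y 1 + a 1 / x 1 * ((- 2%:R) * u)) + (b 2 - (- 3%:R) * a 2) / (y 2 + a 2 / x 2 * ((- 2%:R) * u)) + (b 3 - (- 3%:R) * a 3) / (y 3 + a 3 / x 3 * ((- 2%:R) * u)) + (b 4 - (- 3%:R) * a 4) / (y 4 + a 4 / x 4 * ((- 2%:R) * u)) + (b 5 - (- 3%:R) * a 5) / (y 5 + a 5 / x 5 * ((- 2%:R) * u)) = 0].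
Proof.
have eP := stepP hx hy nx nq.
have ex := stepX hx hy nx nq.
have ca1 : a 1 = (((2%:R)) * a 0 + ((1%:R)) * b 0) by rewrite ha ; ring.
have cb1 : b 1 = (((- 3%:R)) * a 0 + ((- 1%:R)) * b 0) by rewrite hb ; ring.
have cP1 : x 1 * y 1 = ((((1%:R) * u)) * a 0 + (((1%:R) * u)) * b 0 + ((1%:R)) * (x 0 * y 0)) by rewrite eP ; ring.
have cx1 : x 1 = x 0 * ((((1%:R) * u)) * a 0 + (((1%:R) * u)) * b 0 + ((1%:R)) * (x 0 * y 0)) / ((x 0 * y 0) + ((- 2%:R) * u) * a 0) by rewrite (ex 0) cP1 .
have ca2 : a 2 = (((1%:R)) * a 0 + ((1%:R)) * b 0) by rewrite ha ca1 cb1; ring.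
have cb2 : b 2 = (((- 3%:R)) * a 0 + ((- 2%:R)) * b 0) by rewrite hb ca1 cb1; ring.
have cP2 : x 2 * y 2 = ((((1%:R) * u)) * b 0 + ((1%:R)) * (x 0 * y 0)) by rewrite eP cP1 ca1 cb1; ring.
have cx2 : x 2 = x 0 * ((((1%:R) * u)) * a 0 + (((1%:R) * u)) * b 0 + ((1%:R)) * (x 0 * y 0)) / ((x 0 * y 0) + ((- 2%:R) * u) * a 0) * ((((1%:R) * u)) * b 0 + ((1%:R)) * (x 0 * y 0)) / (((((1%:R) * u)) * a 0 + (((1%:R) * u)) * b 0 + ((1%:R)) * (x 0 * y 0)) + ((- 2%:R) * u) * (((2%:R)) * a 0 + ((1%:R)) * b 0)) by rewrite (ex 1) cP2 cP1 ca1 cx1.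
have ca3 : a 3 = (((- 1%:R)) * a 0) by rewrite ha ca2 cb2; ring.
have cb3 : b 3 = (((- 1%:R)) * b 0) by rewrite hb ca2 cb2; ring.
have cP3 : x 3 * y 3 = ((((- 2%:R) * u)) * a 0 + ((1%:R)) * (x 0 * y 0)) by rewrite eP cP2 ca2 cb2; ring.
have cx3 : x 3 = x 0 * ((((1%:R) * u)) * a 0 + (((1%:R) * u)) * b 0 + ((1%:R)) * (x 0 * y 0)) / ((x 0 * y 0) + ((- 2%:R) * u) * a 0) * ((((1%:R) * u)) * b 0 + ((1%:R)) * (x 0 * y 0)) / (((((1%:R) * u)) * a 0 + (((1%:R) * u)) * b 0 + ((1%:R)) * (x 0 * y 0)) + ((- 2%:R) * u) * (((2%:R)) * a 0 + ((1%:R)) * b 0)) * ((((- 2%:R) * u)) * a 0 + ((1%:R)) * (x 0 * y 0)) / (((((1%:R) * u)) * b 0 + ((1%:R)) * (x 0 * y 0)) + ((- 2%:R) * u) * (((1%:R)) * a 0 + ((1%:R)) * b 0)) by rewrite (ex 2) cP3 cP2 ca2 cx2.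
have ca4 : a 4 = (((- 2%:R)) * a 0 + ((- 1%:R)) * b 0) by rewrite ha ca3 cb3; ring.
have cb4 : b 4 = (((3%:R)) * a 0 + ((1%:R)) * b 0) by rewrite hb ca3 cb3; ring.
have cP4 : x 4 * y 4 = ((((- 3%:R) * u)) * a 0 + (((- 1%:R) * u)) * b 0 + ((1%:R)) * (x 0 * y 0)) by rewrite eP cP3 ca3 cb3; ring.
have cx4 : x 4 = x 0 * ((((1%:R) * u)) * a 0 + (((1%:R) * u)) * b 0 + ((1%:R)) * (x 0 * y 0)) / ((x 0 * y 0) + ((- 2%:R) * u) * a 0) * ((((1%:R) * u)) * b 0 + ((1%:R)) * (x 0 * y 0)) / (((((1%:R) * u)) * a 0 + (((1%:R) * u)) * b 0 + ((1%:R)) * (x 0 * y 0)) + ((- 2%:R) * u) * (((2%:R)) * a 0 + ((1%:R)) * b 0)) * ((((- 2%:R) * u)) * a 0 + ((1%:R)) * (x 0 * y 0)) / (((((1%:R) * u)) * b 0 + ((1%:R)) * (x 0 * y 0)) + ((- 2%:R) * u) * (((1%:R)) * a 0 + ((1%:R)) * b 0)) * ((((- 3%:R) * u)) * a 0 + (((- 1%:R) * u)) * b 0 + ((1%:R)) * (x 0 * y 0)) / (((((- 2%:R) * u)) * a 0 + ((1%:R)) * (x 0 * y 0)) + ((- 2%:R) * u) * (((- 1%:R)) * a 0)) by rewrite (ex 3) cP4 cP3 ca3 cx3.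
have ca5 : a 5 = (((- 1%:R)) * a 0 + ((- 1%:R)) * b 0) by rewrite ha ca4 cb4; ring.
have cb5 : b 5 = (((3%:R)) * a 0 + ((2%:R)) * b 0) by rewrite hb ca4 cb4; ring.
have cP5 : x 5 * y 5 = ((((- 2%:R) * u)) * a 0 + (((- 1%:R) * u)) * b 0 + ((1%:R)) * (x 0 * y 0)) by rewrite eP cP4 ca4 cb4; ring.
have cx5 : x 5 = x 0 * ((((1%:R) * u)) * a 0 + (((1%:R) * u)) * b 0 + ((1%:R)) * (x 0 * y 0)) / ((x 0 * y 0) + ((- 2%:R) * u) * a 0) * ((((1%:R) * u)) * b 0 + ((1%:R)) * (x 0 * y 0)) / (((((1%:R) * u)) * a 0 + (((1%:R) * u)) * b 0 + ((1%:R)) * (x 0 * y 0)) + ((- 2%:R) * u) * (((2%:R)) * a 0 + ((1%:R)) * b 0)) * ((((- 2%:R) * u)) * a 0 + ((1%:R)) * (x 0 * y 0)) / (((((1%:R) * u)) * b 0 + ((1%:R)) * (x 0 * y 0)) + ((- 2%:R) * u) * (((1%:R)) * a 0 + ((1%:R)) * b 0)) * ((((- 3%:R) * u)) * a 0 + (((- 1%:R) * u)) * b 0 + ((1%:R)) * (x 0 * y 0)) / (((((- 2%:R) * u)) * a 0 + ((1%:R)) * (x 0 * y 0)) + ((- 2%:R) * u) * (((- 1%:R)) * a 0)) * ((((- 2%:R) * u)) * a 0 + (((- 1%:R) * u)) * b 0 + ((1%:R)) * (x 0 * y 0)) / (((((- 3%:R) * u)) * a 0 + (((- 1%:R) * u))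 * b 0 + ((1%:R)) * (x 0 * y 0)) + ((- 2%:R) * u) * (((- 2%:R)) * a 0 + ((- 1%:R)) * b 0)) by rewrite (ex 4) cP5 cP4 ca4 cx4.
have nP0 : x 0 * y 0 != 0 by exact: mulf_neq0.
have nQ0 : ((x 0 * y 0) + ((- 2%:R) * u) * a 0) != 0 by rewrite -(eqQ _ _ _ (nx 0)); exact: mulf_neq0.
have nP1 : ((((1%:R) * u)) * a 0 + (((1%:R) * u)) * b 0 + ((1%:R)) * (x 0 * y 0)) != 0 by rewrite -cP1; exact: mulf_neq0.
have nQ1 : (((((1%:R) * u)) * a 0 + (((1%:R) * u)) * b 0 + ((1%:R)) * (x 0 * y 0)) + ((- 2%:R) * u) * (((2%:R)) * a 0 + ((1%:R)) * b 0)) != 0 by rewrite -cP1 -ca1 -(eqQ _ _ _ (nx 1)); exact: mulf_neq0.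
have nP2 : ((((1%:R) * u)) * b 0 + ((1%:R)) * (x 0 * y 0)) != 0 by rewrite -cP2; exact: mulf_neq0.
have nQ2 : (((((1%:R) * u)) * b 0 + ((1%:R)) * (x 0 * y 0)) + ((- 2%:R) * u) * (((1%:R)) * a 0 + ((1%:R)) * b 0)) != 0 by rewrite -cP2 -ca2 -(eqQ _ _ _ (nx 2)); exact: mulf_neq0.
have nP3 : ((((- 2%:R) * u)) * a 0 + ((1%:R)) * (x 0 * y 0)) != 0 by rewrite -cP3; exact: mulf_neq0.
have nQ3 : (((((- 2%:R) * u)) * a 0 + ((1%:R)) * (x 0 * y 0)) + ((- 2%:R) * u) * (((- 1%:R)) * a 0)) != 0 by rewrite -cP3 -ca3 -(eqQ _ _ _ (nx 3)); exact: mulf_neq0.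
have nP4 : ((((- 3%:R) * u)) * a 0 + (((- 1%:R) * u)) * b 0 + ((1%:R)) * (x 0 * y 0)) != 0 by rewrite -cP4; exact: mulf_neq0.
have nQ4 : (((((- 3%:R) * u)) * a 0 + (((- 1%:R) * u)) * b 0 + ((1%:R)) * (x 0 * y 0)) + ((- 2%:R) * u) * (((- 2%:R)) * a 0 + ((- 1%:R)) * b 0)) != 0 by rewrite -cP4 -ca4 -(eqQ _ _ _ (nx 4)); exact: mulf_neq0.
have nP5 : ((((- 2%:R) * u)) * a 0 + (((- 1%:R) * u)) * b 0 + ((1%:R)) * (x 0 * y 0)) != 0 by rewrite -cP5; exact: mulf_neq0.
have nQ5 : (((((- 2%:R) * u)) * a 0 + (((- 1%:R) * u)) * b 0 + ((1%:R)) * (x 0 * y 0)) + ((- 2%:R) * u) * (((- 1%:R)) * a 0 + ((- 1%:R)) * b 0)) != 0 by rewrite -cP5 -ca5 -(eqQ _ _ _ (nx 5)); exact: mulf_neq0.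
have nx0 := nx 0. have ny0 := ny 0.
split.
- rewrite ca1 ca2 ca3 ca4 ca5; ring.
- rewrite cb1 cb2 cb3 cb4 cb5; ring.
- rewrite ca1 ca2 ca3 ca4 ca5 cx1 cx2 cx3 cx4 cx5; field; nzt.
- rewrite (eqYQ _ _ _ (nx 0)) (eqYQ _ _ _ (nx 1)) (eqYQ _ _ _ (nx 2)) (eqYQ _ _ _ (nx 3)) (eqYQ _ _ _ (nx 4)) (eqYQ _ _ _ (nx 5)).
  rewrite cP1 cP2 cP3 cP4 cP5 ca1 ca2 ca3 ca4 ca5 cb1 cb2 cb3 cb4 cb5 cx1 cx2 cx3 cx4 cx5; field; nzt.
Qed.

Lemma caseG2d (F : fieldType) (a b x y : nat -> F) (u : F)
  (h2 : (2%:R : F) != 0) (h3 : (3%:R : F) != 0)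
  (ha : forall t, a t.+1 = - a t - (- 1%:R) * (b t - (- 3%:R) * a t))
  (hb : forall t, b t.+1 = - (b t - (- 3%:R) * a t))
  (hx : forall t, x t.+1 = x t + (b t - (- 3%:R) * a t) / (y t + a t / x t * ((- 3%:R) * u)) * u)
  (hy : forall t, y t.+1 = y t + a t / x t * ((- 3%:R) * u))
  (nx : forall t, x t != 0) (ny : forall t, y t != 0)
  (nq : forall t, y t + a t / x t * ((- 3%:R) * u) != 0) :
  [/\ a 0 + a 1 + a 2 + a 3 + a 4 + a 5 = 0, b 0 + b 1 + b 2 + b 3 + b 4 + b 5 = 0,
      a 0 / x 0 + a 1 / x 1 + a 2 / x 2 + a 3 / x 3 + a 4 / x 4 + a 5 / x 5 = 0 &
      (b 0 - (- 3%:R) * a 0) / (y 0 + a 0 / x 0 * ((- 3%:R) * u)) + (b 1 - (- 3%:R) * a 1) / (y 1 + a 1 / x 1 * ((- 3%:R) * u)) + (b 2 - (- 3%:R) * a 2) / (y 2 + a 2 / x 2 * ((- 3%:R) * u)) + (b 3 - (- 3%:R) * a 3) / (y 3 + a 3 / x 3 * ((- 3%:R) * u)) + (b 4 - (- 3%:R) * a 4) / (y 4 + a 4 / x 4 * ((- 3%:R) * u)) + (b 5 - (- 3%:R) * a 5) / (y 5 + a 5 / x 5 * ((- 3%:R) * u)) = 0].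
Proof.
have eP := stepP hx hy nx nq.
have ex := stepX hx hy nx nq.
have ca1 : a 1 = (((2%:R)) * a 0 + ((1%:R)) * b 0) by rewrite ha ; ring.
have cb1 : b 1 = (((- 3%:R)) * a 0 + ((- 1%:R)) * b 0) by rewrite hb ; ring.
have cP1 : x 1 * y 1 = ((((1%:R) * u)) * b 0 + ((1%:R)) * (x 0 * y 0)) by rewrite eP ; ring.
have cx1 : x 1 = x 0 * ((((1%:R) * u)) * b 0 + ((1%:R)) * (x 0 * y 0)) / ((x 0 * y 0) + ((- 3%:R) * u) * a 0) by rewrite (ex 0) cP1 .
have ca2 : a 2 = (((1%:R)) * a 0 + ((1%:R)) * b 0) by rewrite ha ca1 cb1; ring.
have cb2 : b 2 = (((- 3%:R)) * a 0 + ((- 2%:R)) * b 0) by rewrite hb ca1 cb1; ring.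
have cP2 : x 2 * y 2 = ((((- 3%:R) * u)) * a 0 + ((1%:R)) * (x 0 * y 0)) by rewrite eP cP1 ca1 cb1; ring.
have cx2 : x 2 = x 0 * ((((1%:R) * u)) * b 0 + ((1%:R)) * (x 0 * y 0)) / ((x 0 * y 0) + ((- 3%:R) * u) * a 0) * ((((- 3%:R) * u)) * a 0 + ((1%:R)) * (x 0 * y 0)) / (((((1%:R) * u)) * b 0 + ((1%:R)) * (x 0 * y 0)) + ((- 3%:R) * u) * (((2%:R)) * a 0 + ((1%:R)) * b 0)) by rewrite (ex 1) cP2 cP1 ca1 cx1.
have ca3 : a 3 = (((- 1%:R)) * a 0) by rewrite ha ca2 cb2; ring.
have cb3 : b 3 = (((- 1%:R)) * b 0) by rewrite hb ca2 cb2; ring.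
have cP3 : x 3 * y 3 = ((((- 6%:R) * u)) * a 0 + (((- 2%:R) * u)) * b 0 + ((1%:R)) * (x 0 * y 0)) by rewrite eP cP2 ca2 cb2; ring.
have cx3 : x 3 = x 0 * ((((1%:R) * u)) * b 0 + ((1%:R)) * (x 0 * y 0)) / ((x 0 * y 0) + ((- 3%:R) * u) * a 0) * ((((- 3%:R) * u)) * a 0 + ((1%:R)) * (x 0 * y 0)) / (((((1%:R) * u)) * b 0 + ((1%:R)) * (x 0 * y 0)) + ((- 3%:R) * u) * (((2%:R)) * a 0 + ((1%:R)) * b 0)) * ((((- 6%:R) * u)) * a 0 + (((- 2%:R) * u)) * b 0 + ((1%:R)) * (x 0 * y 0)) / (((((- 3%:R) * u)) * a 0 + ((1%:R)) * (x 0 * y 0)) + ((- 3%:R) * u) * (((1%:R)) * a 0 + ((1%:R)) * b 0)) by rewrite (ex 2) cP3 cP2 ca2 cx2.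
have ca4 : a 4 = (((- 2%:R)) * a 0 + ((- 1%:R)) * b 0) by rewrite ha ca3 cb3; ring.
have cb4 : b 4 = (((3%:R)) * a 0 + ((1%:R)) * b 0) by rewrite hb ca3 cb3; ring.
have cP4 : x 4 * y 4 = ((((- 6%:R) * u)) * a 0 + (((- 3%:R) * u)) * b 0 + ((1%:R)) * (x 0 * y 0)) by rewrite eP cP3 ca3 cb3; ring.
have cx4 : x 4 = x 0 * ((((1%:R) * u)) * b 0 + ((1%:R)) * (x 0 * y 0)) / ((x 0 * y 0) + ((- 3%:R) * u) * a 0) * ((((- 3%:R) * u)) * a 0 + ((1%:R)) * (x 0 * y 0)) / (((((1%:R) * u)) * b 0 + ((1%:R)) * (x 0 * y 0)) + ((- 3%:R) * u) * (((2%:R)) * a 0 + ((1%:R)) * b 0)) * ((((- 6%:R) * u)) * a 0 + (((- 2%:R) * u)) * b 0 + ((1%:R)) * (x 0 * y 0)) / (((((- 3%:R) * u)) * a 0 + ((1%:R)) * (x 0 * y 0)) + ((- 3%:R) * u) * (((1%:R)) * a 0 + ((1%:R)) * b 0)) * ((((- 6%:R) * u)) * a 0 + (((- 3%:R) * u)) * b 0 + ((1%:R)) * (x 0 * y 0)) / (((((- 6%:R) * u)) * a 0 + (((- 2%:R) * u)) * b 0 + ((1%:R)) * (x 0 * y 0)) + ((- 3%:R) * u) * (((- 1%:R)) * a 0)) by rewrite (ex 3) cP4 cP3 ca3 cx3.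
have ca5 : a 5 = (((- 1%:R)) * a 0 + ((- 1%:R)) * b 0) by rewrite ha ca4 cb4; ring.
have cb5 : b 5 = (((3%:R)) * a 0 + ((2%:R)) * b 0) by rewrite hb ca4 cb4; ring.
have cP5 : x 5 * y 5 = ((((- 3%:R) * u)) * a 0 + (((- 2%:R) * u)) * b 0 + ((1%:R)) * (x 0 * y 0)) by rewrite eP cP4 ca4 cb4; ring.
have cx5 : x 5 = x 0 * ((((1%:R) * u)) * b 0 + ((1%:R)) * (x 0 * y 0)) / ((x 0 * y 0) + ((- 3%:R) * u) * a 0) * ((((- 3%:R) * u)) * a 0 + ((1%:R)) * (x 0 * y 0)) / (((((1%:R) * u)) * b 0 + ((1%:R)) * (x 0 * y 0)) + ((- 3%:R) * u) * (((2%:R)) * a 0 + ((1%:R)) * b 0)) * ((((- 6%:R) * u)) * a 0 + (((- 2%:R) * u)) * b 0 + ((1%:R)) * (x 0 * y 0)) / (((((- 3%:R) * u)) * a 0 + ((1%:R)) * (x 0 * y 0)) + ((- 3%:R) * u) * (((1%:R)) * a 0 + ((1%:R)) * b 0)) * ((((- 6%:R) * u)) * a 0 + (((- 3%:R) * u)) * b 0 + ((1%:R)) * (x 0 * y 0)) / (((((- 6%:R) * u)) * a 0 + (((- 2%:R) * u)) * b 0 + ((1%:R)) * (x 0 * y 0)) + ((- 3%:R) * u) * (((- 1%:R)) * a 0)) * ((((- 3%:R) * u)) * a 0 + (((- 2%:R) * u)) * b 0 + ((1%:R)) * (x 0 * y 0)) / (((((- 6%:R) * u)) * a 0 + (((-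 3%:R) * u)) * b 0 + ((1%:R)) * (x 0 * y 0)) + ((- 3%:R) * u) * (((- 2%:R)) * a 0 + ((- 1%:R)) * b 0)) by rewrite (ex 4) cP5 cP4 ca4 cx4.
have nP0 : x 0 * y 0 != 0 by exact: mulf_neq0.
have nQ0 : ((x 0 * y 0) + ((- 3%:R) * u) * a 0) != 0 by rewrite -(eqQ _ _ _ (nx 0)); exact: mulf_neq0.
have nP1 : ((((1%:R) * u)) * b 0 + ((1%:R)) * (x 0 * y 0)) != 0 by rewrite -cP1; exact: mulf_neq0.
have nQ1 : (((((1%:R) * u)) * b 0 + ((1%:R)) * (x 0 * y 0)) + ((- 3%:R) * u) * (((2%:R)) * a 0 + ((1%:R)) * b 0)) != 0 by rewrite -cP1 -ca1 -(eqQ _ _ _ (nx 1)); exact: mulf_neq0.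
have nP2 : ((((- 3%:R) * u)) * a 0 + ((1%:R)) * (x 0 * y 0)) != 0 by rewrite -cP2; exact: mulf_neq0.
have nQ2 : (((((- 3%:R) * u)) * a 0 + ((1%:R)) * (x 0 * y 0)) + ((- 3%:R) * u) * (((1%:R)) * a 0 + ((1%:R)) * b 0)) != 0 by rewrite -cP2 -ca2 -(eqQ _ _ _ (nx 2)); exact: mulf_neq0.
have nP3 : ((((- 6%:R) * u)) * a 0 + (((- 2%:R) * u)) * b 0 + ((1%:R)) * (x 0 * y 0)) != 0 by rewrite -cP3; exact: mulf_neq0.
have nQ3 : (((((- 6%:R) * u)) * a 0 + (((- 2%:R) * u)) * b 0 + ((1%:R)) * (x 0 * y 0)) + ((- 3%:R) * u) * (((- 1%:R)) * a 0)) != 0 by rewrite -cP3 -ca3 -(eqQ _ _ _ (nx 3)); exact: mulf_neq0.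
have nP4 : ((((- 6%:R) * u)) * a 0 + (((- 3%:R) * u)) * b 0 + ((1%:R)) * (x 0 * y 0)) != 0 by rewrite -cP4; exact: mulf_neq0.
have nQ4 : (((((- 6%:R) * u)) * a 0 + (((- 3%:R) * u)) * b 0 + ((1%:R)) * (x 0 * y 0)) + ((- 3%:R) * u) * (((- 2%:R)) * a 0 + ((- 1%:R)) * b 0)) != 0 by rewrite -cP4 -ca4 -(eqQ _ _ _ (nx 4)); exact: mulf_neq0.
have nP5 : ((((- 3%:R) * u)) * a 0 + (((- 2%:R) * u)) * b 0 + ((1%:R)) * (x 0 * y 0)) != 0 by rewrite -cP5; exact: mulf_neq0.
have nQ5 : (((((- 3%:R) * u)) * a 0 + (((- 2%:R) * u)) * b 0 + ((1%:R)) * (x 0 * y 0)) + ((- 3%:R) * u) * (((- 1%:R)) * a 0 + ((- 1%:R)) * b 0)) != 0 by rewrite -cP5 -ca5 -(eqQ _ _ _ (nx 5)); exact: mulf_neq0.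
have nx0 := nx 0. have ny0 := ny 0.
split.
- rewrite ca1 ca2 ca3 ca4 ca5; ring.
- rewrite cb1 cb2 cb3 cb4 cb5; ring.
- rewrite ca1 ca2 ca3 ca4 ca5 cx1 cx2 cx3 cx4 cx5; field; nzt.
- rewrite (eqYQ _ _ _ (nx 0)) (eqYQ _ _ _ (nx 1)) (eqYQ _ _ _ (nx 2)) (eqYQ _ _ _ (nx 3)) (eqYQ _ _ _ (nx 4)) (eqYQ _ _ _ (nx 5)).
  rewrite cP1 cP2 cP3 cP4 cP5 ca1 ca2 ca3 ca4 ca5 cb1 cb2 cb3 cb4 cb5 cx1 cx2 cx3 cx4 cx5; field; nzt.
Qed.

Fixpoint itR (R : pzRingType) (f : {rmorphism R -> R}) (t : nat) : {rmorphism R -> R} :=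
  if t is t'.+1 then (f \o itR f t')%FUN else idfun.

Lemma itRE (R : pzRingType) (f : {rmorphism R -> R}) t z : itR f t z = iter t f z.
Proof. by elim: t => //= t ->. Qed.

Lemma itRS (R : pzRingType) (f : {rmorphism R -> R}) t z : itR f t.+1 z = itR f t (f z).
Proof. by rewrite !itRE iterSr. Qed.

Lemma tele (R : pzRingType) (f : {rmorphism R -> R}) m z :
  itR f m z - z = \sum_(t < m) itR f t (f z - z).
Proof.
elim: m => [|m IH]; first by rewrite big_ord0 /= subrr.
rewrite big_ord_recr /= -IH rmorphB /= -itRS /=.
by rewrite addrC addrA subrK.
Qed.

Lemma lin_sum (R : pzRingType) m (g p q : nat -> R) (c1 c2 : R) :
  (forall t, g t = c1 * p t + c2 * q t) ->
  \sum_(t < m) g t = c1 * \sum_(t < m) p t + c2 * \sum_(t < m) q t.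
Proof.
move=> h; rewrite !mulr_sumr -big_split /=.
by apply: eq_bigr => t _; rewrite h.
Qed.

Section Pair.
Context (n : nat) (A : 'M[int]_n) (U : 'M[CC]_n) (s : 'I_n -> {rmorphism RatF n -> RatF n}).
Context (hs : forall i, is_s A U i (s i)) (Aii : forall i, A i i = 2%:Z) (Uii : forall i, U i i = 0).
Local Notation K := (RatF n).

Lemma s_cst i c : s i (cst n c) = cst n c. Proof. by case: (hs i). Qed.
Lemma s_alpha i k : s i (alpha k) = alpha k - (A i k)%:~R * alpha i. Proof. by case: (hs i). Qed.
Lemma s_fvar i k : s i (fvar k) = fvar k + alpha i / fvar i * cst n (U i k). Proof. by case: (hs i). Qed.
Lemma s_ai i : s i (alpha i) = - alpha i. Proof. rewrite s_alpha Aii; ring. Qed.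
Lemma s_fi i : s i (fvar i) = fvar i. Proof. by rewrite s_fvar Uii rmorph0 mulr0 addr0. Qed.
Lemma s_neq0 i z : z != 0 -> s i z != 0.
Proof.
move=> hz; case: (hs i) => [[g h1 h2] _ _ _].
by rewrite raddf_eq0 //; exact: can_inj h1.
Qed.

Lemma fvar_ne0 j : fvar j != 0 :> K.
Proof.
rewrite /fvar tofrac_eq0; apply/eqP=> h.
have e : ('X_(rshift n j) : {mpoly CC[n + n]})@_(U_(rshift n j)%MM) = 1 by rewrite mcoeffX eqxx.
by move: e; rewrite h mcoeff0 => /eqP; rewrite eq_sym oner_eq0.
Qed.

Lemma sK_inv i x : s i (s i x) = x.
Proof.
apply: (rmor_ext (h := fun x => s i (s i x))).
- exact: rmor_comp.
- by move=> c; rewrite !s_cst.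
- by move=> j; rewrite s_alpha rmorphB rmorphM rmorph_int s_alpha s_ai; ring.
- move=> j; rewrite s_fvar rmorphD !rmorphM fmorphV s_fvar s_fi s_ai s_cst.
  by rewrite mulNr mulNr addrK.
Qed.

Section IJ.
Context (i j : 'I_n).
Definition T : {rmorphism K -> K} := (s i \o s j)%FUN.
Local Notation Aij := ((A i j)%:~R : K).
Local Notation Aji := ((A j i)%:~R : K).
Local Notation uij := (cst n (U i j)).
Local Notation uji := (cst n (U j i)).
Definition sa t := itR T t (alpha i).
Definition sb t := itR T t (alpha j).
Definition sx t := itR T t (fvar i).
Definition sy t := itR T t (fvar j).

Lemma itR_cst t c : itR T t (cst n c) = cst n c.
Proof. by elim: t => //= t ->; rewrite s_cst s_cst. Qed.

Lemma itR_neq0 t z : z != 0 -> itR T t z != 0.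
Proof. move=> hz; elim: t => [|t IH] /=; [exact: hz | exact: s_neq0 (s_neq0 _ IH)]. Qed.

Lemma T_ai : T (alpha i) = - alpha i - Aji * (alpha j - Aij * alpha i).
Proof. by rewrite /= s_alpha rmorphB rmorphM rmorph_int s_ai s_alpha. Qed.

Lemma T_aj : T (alpha j) = - (alpha j - Aij * alpha i).
Proof. by rewrite /= s_ai rmorphN s_alpha. Qed.

Lemma T_fi : T (fvar i) = fvar i + (alpha j - Aij * alpha i) / (fvar j + alpha i / fvar i * uij) * uji.
Proof. by rewrite /= s_fvar rmorphD !rmorphM fmorphV s_fi s_alpha s_fvar s_cst. Qed.

Lemma T_fj : T (fvar j) = fvar j + alpha i / fvar i * uij.
Proof. by rewrite /= s_fi s_fvar. Qed.

Lemma T_ak k : T (alpha k) = alpha k - (A j k)%:~R * (alpha j - Aij * alpha i) - (A i k)%:~R * alpha i.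
Proof. rewrite /= s_alpha rmorphB rmorphM rmorph_int s_alpha s_alpha; ring. Qed.

Lemma T_fk k : T (fvar k) = fvar k + alpha i / fvar i * cst n (U i k) +
   (alpha j - Aij * alpha i) / (fvar j + alpha i / fvar i * uij) * cst n (U j k).
Proof. by rewrite /= s_fvar rmorphD !rmorphM fmorphV s_fvar s_alpha s_fvar s_cst. Qed.

Lemma ha t : sa t.+1 = - sa t - Aji * (sb t - Aij * sa t).
Proof. by rewrite /sa /sb itRS T_ai rmorphB rmorphN !rmorphM rmorphB rmorphM !rmorph_int. Qed.

Lemma hb t : sb t.+1 = - (sb t - Aij * sa t).
Proof. by rewrite /sa /sb itRS T_aj rmorphN rmorphB rmorphM rmorph_int. Qed.

Lemma hx t : sx t.+1 = sx t + (sb t - Aij * sa t) / (sy t + sa t / sx t * uij) * uji.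
Proof.
rewrite /sa /sb /sx /sy itRS T_fi.
by do 3 rewrite ?rmorphD ?rmorphB ?rmorphN ?rmorphM ?fmorphV ?rmorph_int ?itR_cst.
Qed.

Lemma hy t : sy t.+1 = sy t + sa t / sx t * uij.
Proof. by rewrite /sa /sx /sy itRS T_fj; do 3 rewrite ?rmorphD ?rmorphB ?rmorphN ?rmorphM ?fmorphV ?rmorph_int ?itR_cst. Qed.

Lemma nx t : sx t != 0. Proof. exact: itR_neq0 (fvar_ne0 i). Qed.
Lemma ny t : sy t != 0. Proof. exact: itR_neq0 (fvar_ne0 j). Qed.
Lemma nq t : sy t + sa t / sx t * uij != 0.
Proof.
have := itR_neq0 t (s_neq0 i (fvar_ne0 j)).
by rewrite s_fvar; do 3 rewrite ?rmorphD ?rmorphB ?rmorphN ?rmorphM ?fmorphV ?rmorph_int ?itR_cst.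
Qed.

Lemma pair_core m :
  \sum_(t < m) sa t = 0 -> \sum_(t < m) sb t = 0 ->
  \sum_(t < m) sa t / sx t = 0 ->
  \sum_(t < m) (sb t - Aij * sa t) / (sy t + sa t / sx t * uij) = 0 ->
  forall z, iter m (fun y => s i (s j y)) z = z.
Proof.
move=> S1 S2 S3 S4 z.
have -> : iter m (fun y => s i (s j y)) z = itR T m z by rewrite itRE.
apply: (rmor_ext (h := itR T m)); first exact: rmor_rm.
- by move=> c; rewrite itR_cst.
- move=> k; apply/eqP; rewrite -subr_eq0 tele.
  rewrite (@lin_sum _ m (fun t : nat => itR T t (T (alpha k) - alpha k)) sa sb (- (A i k)%:~R + (A j k)%:~R * Aij) (- (A j k)%:~R)).
    by rewrite S1 S2 !mulr0 addr0.
  move=> t; rewrite T_ak.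
  do 3 rewrite ?rmorphD ?rmorphB ?rmorphN ?rmorphM ?fmorphV ?rmorph_int ?itR_cst.
  rewrite -/(sa t) -/(sb t). ring.
- move=> k; apply/eqP; rewrite -subr_eq0 tele.
  rewrite (@lin_sum _ m (fun t : nat => itR T t (T (fvar k) - fvar k)) (fun t => sa t / sx t) (fun t => (sb t - Aij * sa t) / (sy t + sa t / sx t * uij))
     (cst n (U i k)) (cst n (U j k))).
    by rewrite S3 S4 !mulr0 addr0.
  move=> t; rewrite T_fk.
  do 3 rewrite ?rmorphD ?rmorphB ?rmorphN ?rmorphM ?fmorphV ?rmorph_int ?itR_cst.
  rewrite -/(sa t) -/(sb t) -/(sx t) -/(sy t). ring.
Qed.

End IJ.
End Pair.

Lemma intrN_nat (R : pzRingType) k : ((- (k%:Z))%:~R : R) = - k%:R.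
Proof. by rewrite mulrNz. Qed.

Lemma conv32f (F E : fieldType) (f : {rmorphism F -> E}) (c : F) : (2%:R : E) != 0 ->
  f (- ((3%:R / 2%:R) * c)) = (- 3%:R) * (f c / 2%:R).
Proof. by move=> h; rewrite rmorphN rmorphM fmorph_div !rmorph_nat; field. Qed.

Lemma conv32 (F : fieldType) (u : F) : (2%:R : F) != 0 -> - (3%:R * 2%:R^-1 * u) = (- 3%:R) * (u / 2%:R).
Proof. by move=> h; field. Qed.

Lemma conv2 (F : fieldType) (u : F) : (2%:R : F) != 0 -> u = 2%:R * (u / 2%:R).
Proof. by move=> h; field. Qed.

Section Cases.
Context (n : nat) (A : 'M[int]_n) (U : 'M[CC]_n) (s : 'I_n -> {rmorphism RatF n -> RatF n}).
Context (hs : forall i, is_s A U i (s i)) (Aii : forall i, A i i = 2%:Z) (Uii : forall i, U i i = 0).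
Context (h2 : (2%:R : RatF n) != 0) (h3 : (3%:R : RatF n) != 0).
Context (i j : 'I_n).
Local Notation K := (RatF n).
Lemma rel_00 : A i j = 0 -> A j i = 0 -> U i j = 0 -> U j i = 0 ->
  forall z, iter 2 (fun y => s i (s j y)) z = z.
Proof.
move=> hij hji hu0 hu1.
have eA : (A i j)%:~R = (0 : K) by by rewrite hij.
have eB : (A j i)%:~R = (0 : K) by by rewrite hji.
have eu : cst n (U i j) = 0 by rewrite hu0 rmorph0.
have euji : cst n (U j i) = 0 by rewrite hu1 rmorph0.
have ha' : forall t, sa s i j t.+1 = - sa s i j t - (0) * (sb s i j t - (0) * sa s i j t).
  by move=> t; rewrite (ha hs Aii) eA eB.
have hb' : forall t, sb s i j t.+1 = - (sb s i j t - (0) * sa s i j t).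
  by move=> t; rewrite (hb hs Aii) eA.
have hx' : forall t, sx s i j t.+1 = sx s i j t + (sb s i j t - (0) * sa s i j t) / (sy s i j t + sa s i j t / sx s i j t * 0) * 0.
  by move=> t; rewrite (hx hs Uii) eA [in LHS]euji [in LHS]eu.
have hy' : forall t, sy s i j t.+1 = sy s i j t + sa s i j t / sx s i j t * 0.
  by move=> t; rewrite (hy hs Uii) eu.
have nq' : forall t, sy s i j t + sa s i j t / sx s i j t * 0 != 0.
  by move=> t; have := nq hs i j t; rewrite eu.
have [S1 S2 S3 S4] := case00 0 h2 h3 ha' hb' hx' hy' (nx hs i j) (ny hs i j) nq'.
apply: (pair_core hs); rewrite !big_ord_recr big_ord0 /= add0r ?eA ?eu //.
Qed.

Lemma rel_A2 : A i j = -1 -> A j i = -1 -> U i j = - U j i ->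
  forall z, iter 3 (fun y => s i (s j y)) z = z.
Proof.
move=> hij hji hu0.
have eA : (A i j)%:~R = (- 1%:R : K) by rewrite hij intrN_nat.
have eB : (A j i)%:~R = (- 1%:R : K) by rewrite hji intrN_nat.
have eu : cst n (U i j) = (- 1%:R) * cst n (U j i) by rewrite hu0 rmorphN; ring.
have ha' : forall t, sa s i j t.+1 = - sa s i j t - (- 1%:R) * (sb s i j t - (- 1%:R) * sa s i j t).
  by move=> t; rewrite (ha hs Aii) eA eB.
have hb' : forall t, sb s i j t.+1 = - (sb s i j t - (- 1%:R) * sa s i j t).
  by move=> t; rewrite (hb hs Aii) eA.
have hx' : forall t, sx s i j t.+1 = sx s i j t + (sb s i j t - (- 1%:R) * sa s i j t) / (sy s i j t + sa s i j t / sx s i j t * ((- 1%:R) * cst n (U j i))) * cst n (U j i).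
  by move=> t; rewrite (hx hs Uii) eA [in LHS]eu.
have hy' : forall t, sy s i j t.+1 = sy s i j t + sa s i j t / sx s i j t * ((- 1%:R) * cst n (U j i)).
  by move=> t; rewrite (hy hs Uii) eu.
have nq' : forall t, sy s i j t + sa s i j t / sx s i j t * ((- 1%:R) * cst n (U j i)) != 0.
  by move=> t; have := nq hs i j t; rewrite eu.
have [S1 S2 S3 S4] := caseA2 (u := (cst n (U j i))) h2 h3 ha' hb' hx' hy' (nx hs i j) (ny hs i j) nq'.
apply: (pair_core hs); rewrite !big_ord_recr big_ord0 /= add0r ?eA ?eu //.
Qed.

Lemma rel_B2a : A i j = -2%:Z -> A j i = -1 -> U i j = - U j i ->
  forall z, iter 4 (fun y => s i (s j y)) z = z.
Proof.
move=> hij hji hu0.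
have eA : (A i j)%:~R = (- 2%:R : K) by rewrite hij intrN_nat.
have eB : (A j i)%:~R = (- 1%:R : K) by rewrite hji intrN_nat.
have eu : cst n (U i j) = (- 1%:R) * cst n (U j i) by rewrite hu0 rmorphN; ring.
have ha' : forall t, sa s i j t.+1 = - sa s i j t - (- 1%:R) * (sb s i j t - (- 2%:R) * sa s i j t).
  by move=> t; rewrite (ha hs Aii) eA eB.
have hb' : forall t, sb s i j t.+1 = - (sb s i j t - (- 2%:R) * sa s i j t).
  by move=> t; rewrite (hb hs Aii) eA.
have hx' : forall t, sx s i j t.+1 = sx s i j t + (sb s i j t - (- 2%:R) * sa s i j t) / (sy s i j t + sa s i j t / sx s i j t * ((- 1%:R) * cst n (U j i))) * cst n (U j i).
  by move=> t; rewrite (hx hs Uii) eA [in LHS]eu.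
have hy' : forall t, sy s i j t.+1 = sy s i j t + sa s i j t / sx s i j t * ((- 1%:R) * cst n (U j i)).
  by move=> t; rewrite (hy hs Uii) eu.
have nq' : forall t, sy s i j t + sa s i j t / sx s i j t * ((- 1%:R) * cst n (U j i)) != 0.
  by move=> t; have := nq hs i j t; rewrite eu.
have [S1 S2 S3 S4] := caseB2a (u := (cst n (U j i))) h2 h3 ha' hb' hx' hy' (nx hs i j) (ny hs i j) nq'.
apply: (pair_core hs); rewrite !big_ord_recr big_ord0 /= add0r ?eA ?eu //.
Qed.

Lemma rel_B2b : A i j = -2%:Z -> A j i = -1 -> U i j = - (2%:R * U j i) ->
  forall z, iter 4 (fun y => s i (s j y)) z = z.
Proof.
move=> hij hji hu0.
have eA : (A i j)%:~R = (- 2%:R : K) by rewrite hij intrN_nat.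
have eB : (A j i)%:~R = (- 1%:R : K) by rewrite hji intrN_nat.
have eu : cst n (U i j) = (- 2%:R) * cst n (U j i) by rewrite hu0 rmorphN rmorphM rmorph_nat; ring.
have ha' : forall t, sa s i j t.+1 = - sa s i j t - (- 1%:R) * (sb s i j t - (- 2%:R) * sa s i j t).
  by move=> t; rewrite (ha hs Aii) eA eB.
have hb' : forall t, sb s i j t.+1 = - (sb s i j t - (- 2%:R) * sa s i j t).
  by move=> t; rewrite (hb hs Aii) eA.
have hx' : forall t, sx s i j t.+1 = sx s i j t + (sb s i j t - (- 2%:R) * sa s i j t) / (sy s i j t + sa s i j t / sx s i j t * ((- 2%:R) * cst n (U j i))) * cst n (U j i).
  by move=> t; rewrite (hx hs Uii) eA [in LHS]eu.
have hy' : forall t, sy s i j t.+1 = sy s i j t + sa s i j t / sx s i j t * ((- 2%:R) * cst n (U j i)).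
  by move=> t; rewrite (hy hs Uii) eu.
have nq' : forall t, sy s i j t + sa s i j t / sx s i j t * ((- 2%:R) * cst n (U j i)) != 0.
  by move=> t; have := nq hs i j t; rewrite eu.
have [S1 S2 S3 S4] := caseB2b (u := (cst n (U j i))) h2 h3 ha' hb' hx' hy' (nx hs i j) (ny hs i j) nq'.
apply: (pair_core hs); rewrite !big_ord_recr big_ord0 /= add0r ?eA ?eu //.
Qed.

Lemma rel_G2a : A i j = -3%:Z -> A j i = -1 -> U i j = - U j i ->
  forall z, iter 6 (fun y => s i (s j y)) z = z.
Proof.
move=> hij hji hu0.
have eA : (A i j)%:~R = (- 3%:R : K) by rewrite hij intrN_nat.
have eB : (A j i)%:~R = (- 1%:R : K) by rewrite hji intrN_nat.
have eu : cst n (U i j) = (- 1%:R) * cst n (U j i) by rewrite hu0 rmorphN; ring.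
have ha' : forall t, sa s i j t.+1 = - sa s i j t - (- 1%:R) * (sb s i j t - (- 3%:R) * sa s i j t).
  by move=> t; rewrite (ha hs Aii) eA eB.
have hb' : forall t, sb s i j t.+1 = - (sb s i j t - (- 3%:R) * sa s i j t).
  by move=> t; rewrite (hb hs Aii) eA.
have hx' : forall t, sx s i j t.+1 = sx s i j t + (sb s i j t - (- 3%:R) * sa s i j t) / (sy s i j t + sa s i j t / sx s i j t * ((- 1%:R) * cst n (U j i))) * cst n (U j i).
  by move=> t; rewrite (hx hs Uii) eA [in LHS]eu.
have hy' : forall t, sy s i j t.+1 = sy s i j t + sa s i j t / sx s i j t * ((- 1%:R) * cst n (U j i)).
  by move=> t; rewrite (hy hs Uii) eu.
have nq' : forall t, sy s i j t + sa s i j t / sx s i j t * ((- 1%:R) * cst n (U j i)) != 0.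
  by move=> t; have := nq hs i j t; rewrite eu.
have [S1 S2 S3 S4] := caseG2a (u := (cst n (U j i))) h2 h3 ha' hb' hx' hy' (nx hs i j) (ny hs i j) nq'.
apply: (pair_core hs); rewrite !big_ord_recr big_ord0 /= add0r ?eA ?eu //.
Qed.

Lemma rel_G2c : A i j = -3%:Z -> A j i = -1 -> U i j = - (2%:R * U j i) ->
  forall z, iter 6 (fun y => s i (s j y)) z = z.
Proof.
move=> hij hji hu0.
have eA : (A i j)%:~R = (- 3%:R : K) by rewrite hij intrN_nat.
have eB : (A j i)%:~R = (- 1%:R : K) by rewrite hji intrN_nat.
have eu : cst n (U i j) = (- 2%:R) * cst n (U j i) by rewrite hu0 rmorphN rmorphM rmorph_nat; ring.
have ha' : forall t, sa s i j t.+1 = - sa s i j t - (- 1%:R) * (sb s i j t - (- 3%:R) * sa s i j t).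
  by move=> t; rewrite (ha hs Aii) eA eB.
have hb' : forall t, sb s i j t.+1 = - (sb s i j t - (- 3%:R) * sa s i j t).
  by move=> t; rewrite (hb hs Aii) eA.
have hx' : forall t, sx s i j t.+1 = sx s i j t + (sb s i j t - (- 3%:R) * sa s i j t) / (sy s i j t + sa s i j t / sx s i j t * ((- 2%:R) * cst n (U j i))) * cst n (U j i).
  by move=> t; rewrite (hx hs Uii) eA [in LHS]eu.
have hy' : forall t, sy s i j t.+1 = sy s i j t + sa s i j t / sx s i j t * ((- 2%:R) * cst n (U j i)).
  by move=> t; rewrite (hy hs Uii) eu.
have nq' : forall t, sy s i j t + sa s i j t / sx s i j t * ((- 2%:R) * cst n (U j i)) != 0.
  by move=> t; have := nq hs i j t; rewrite eu.
have [S1 S2 S3 S4] := caseG2c (u := (cst n (U j i))) h2 h3 ha' hb' hx' hy' (nx hs i j) (ny hs i j) nq'.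
apply: (pair_core hs); rewrite !big_ord_recr big_ord0 /= add0r ?eA ?eu //.
Qed.

Lemma rel_G2d : A i j = -3%:Z -> A j i = -1 -> U i j = - (3%:R * U j i) ->
  forall z, iter 6 (fun y => s i (s j y)) z = z.
Proof.
move=> hij hji hu0.
have eA : (A i j)%:~R = (- 3%:R : K) by rewrite hij intrN_nat.
have eB : (A j i)%:~R = (- 1%:R : K) by rewrite hji intrN_nat.
have eu : cst n (U i j) = (- 3%:R) * cst n (U j i) by rewrite hu0 rmorphN rmorphM rmorph_nat; ring.
have ha' : forall t, sa s i j t.+1 = - sa s i j t - (- 1%:R) * (sb s i j t - (- 3%:R) * sa s i j t).
  by move=> t; rewrite (ha hs Aii) eA eB.
have hb' : forall t, sb s i j t.+1 = - (sb s i j t - (- 3%:R) * sa s i j t).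
  by move=> t; rewrite (hb hs Aii) eA.
have hx' : forall t, sx s i j t.+1 = sx s i j t + (sb s i j t - (- 3%:R) * sa s i j t) / (sy s i j t + sa s i j t / sx s i j t * ((- 3%:R) * cst n (U j i))) * cst n (U j i).
  by move=> t; rewrite (hx hs Uii) eA [in LHS]eu.
have hy' : forall t, sy s i j t.+1 = sy s i j t + sa s i j t / sx s i j t * ((- 3%:R) * cst n (U j i)).
  by move=> t; rewrite (hy hs Uii) eu.
have nq' : forall t, sy s i j t + sa s i j t / sx s i j t * ((- 3%:R) * cst n (U j i)) != 0.
  by move=> t; have := nq hs i j t; rewrite eu.
have [S1 S2 S3 S4] := caseG2d (u := (cst n (U j i))) h2 h3 ha' hb' hx' hy' (nx hs i j) (ny hs i j) nq'.
apply: (pair_core hs); rewrite !big_ord_recr big_ord0 /= add0r ?eA ?eu //.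
Qed.

Lemma rel_G2b : A i j = -3%:Z -> A j i = -1 -> U i j = - ((3%:R / 2%:R) * U j i) ->
  forall z, iter 6 (fun y => s i (s j y)) z = z.
Proof.
move=> hij hji hu0.
have eA : (A i j)%:~R = (- 3%:R : K) by rewrite hij intrN_nat.
have eB : (A j i)%:~R = (- 1%:R : K) by rewrite hji intrN_nat.
have eu : cst n (U i j) = (- 3%:R) * (cst n (U j i) / 2%:R) by rewrite hu0; exact: conv32f h2.
have euji : cst n (U j i) = (2%:R) * (cst n (U j i) / 2%:R) by exact: conv2 h2.
have ha' : forall t, sa s i j t.+1 = - sa s i j t - (- 1%:R) * (sb s i j t - (- 3%:R) * sa s i j t).
  by move=> t; rewrite (ha hs Aii) eA eB.
have hb' : forall t, sb s i j t.+1 = - (sb s i j t - (- 3%:R) * sa s i j t).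
  by move=> t; rewrite (hb hs Aii) eA.
have hx' : forall t, sx s i j t.+1 = sx s i j t + (sb s i j t - (- 3%:R) * sa s i j t) / (sy s i j t + sa s i j t / sx s i j t * ((- 3%:R) * (cst n (U j i) / 2%:R))) * ((2%:R) * (cst n (U j i) / 2%:R)).
  by move=> t; rewrite (hx hs Uii) eA [in LHS]euji [in LHS]eu.
have hy' : forall t, sy s i j t.+1 = sy s i j t + sa s i j t / sx s i j t * ((- 3%:R) * (cst n (U j i) / 2%:R)).
  by move=> t; rewrite (hy hs Uii) eu.
have nq' : forall t, sy s i j t + sa s i j t / sx s i j t * ((- 3%:R) * (cst n (U j i) / 2%:R)) != 0.
  by move=> t; have := nq hs i j t; rewrite eu.
have [S1 S2 S3 S4] := caseG2b (u := (cst n (U j i) / 2%:R)) h2 h3 ha' hb' hx' hy' (nx hs i j) (ny hs i j) nq'.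
apply: (pair_core hs); rewrite !big_ord_recr big_ord0 /= add0r ?eA ?eu //.
Qed.

End Cases.

Local Close Scope quotient_scope.

Lemma swap_iter (n : nat) (A : 'M[int]_n) (U : 'M[CC]_n)
  (s : 'I_n -> {rmorphism RatF n -> RatF n})
  (hs : forall i, is_s A U i (s i)) (Aii : forall i, A i i = 2%:Z) (Uii : forall i, U i i = 0)
  (i j : 'I_n) (m : nat) :
  (forall z, iter m (fun y => s j (s i y)) z = z) ->
  forall z, iter m (fun y => s i (s j y)) z = z.
Proof.
move=> h z.
have e : forall w, iter m (fun y => s i (s j y)) (s i w) = s i (iter m (fun y => s j (s i y)) w).
  by move=> w; elim: m {h} => //= m ->.
by rewrite -{1}(sK_inv hs Aii Uii i z) e h (sK_inv hs Aii Uii).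
Qed.

Lemma prod0 (a b : int) : a * b = 0 -> a = 0 \/ b = 0.
Proof. by move/eqP; rewrite mulf_eq0 => /orP [/eqP -> | /eqP ->]; [left | right]. Qed.

Lemma prod1 (a b : int) : a <= 0 -> b <= 0 -> a * b = 1 -> a = -1 /\ b = -1.
Proof.
move=> ha hb hab.
have h1 : a <= -1 by nia.
have h2 : b <= -1 by nia.
have h3 : -1 <= a by nia.
have e : a = -1 by lia.
by rewrite e in hab; split; lia.
Qed.

Lemma prod2 (a b : int) : a <= 0 -> b <= 0 -> a * b = 2%:Z ->
  (a = -2%:Z /\ b = -1) \/ (a = -1 /\ b = -2%:Z).
Proof.
move=> ha hb hab.
have h1 : a <= -1 by nia.
have h2 : b <= -1 by nia.
have h3 : -2 <= a by nia.
have : a = -1 \/ a = -2 by lia.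
case=> e; rewrite e in hab; lia.
Qed.

Lemma prod3 (a b : int) : a <= 0 -> b <= 0 -> a * b = 3%:Z ->
  (a = -3%:Z /\ b = -1) \/ (a = -1 /\ b = -3%:Z).
Proof.
move=> ha hb hab.
have h1 : a <= -1 by nia.
have h2 : b <= -1 by nia.
have h3 : -3 <= a by nia.
have : a = -1 \/ a = -2 \/ a = -3 by lia.
case=> [e|[e|e]]; rewrite e in hab; lia.
Qed.

Lemma nat_neq0K n k : ((k.+1)%:R : RatF n) != 0.
Proof.
rewrite -(rmorph_nat (cst n)) /cst tofrac_eq0 mpolyC_eq0.
have h : ((k.+1)%:R : complex RR) != 0 by rewrite Num.Theory.pnatr_eq0.
exact: h.
Qed.

Theorem theorem1 (n : nat) (A : 'M[int]_n) (U : 'M[CC]_n) :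
  is_gcm A -> admissible_U A U ->
  (forall i : 'I_n, exists s : {rmorphism RatF n -> RatF n}, is_s A U i s) /\
  (forall s : 'I_n -> {rmorphism RatF n -> RatF n},
     (forall i, is_s A U i (s i)) ->
     (forall i (x : RatF n), s i (s i x) = x) /\
     (forall i j (m : nat), i != j -> coxeter_m (A i j * A j i) = Some m ->
        forall x : RatF n, iter m (fun y => s i (s j y)) x = x)).
Proof.
move=> [Aii Aneg Asym] [U0 U1 U2 U3].
have Uii : forall i, U i i = 0 by move=> i; apply: U0; rewrite eqxx.
split; first by move=> i; exact: exists_s.
move=> s hs.
have h2 := nat_neq0K n 1; have h3 := nat_neq0K n 2.
split; first by move=> i x; exact: (sK_inv hs Aii Uii).
move=> i j m hij hm.
have nij := Aneg i j hij.
have nji : A j i <= 0 by apply: Aneg; rewrite eq_sym.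
move: hm; rewrite /coxeter_m.
case: eqP => [p0 [<-]|_].
  have [e1 e2] : A i j = 0 /\ A j i = 0.
    by case: (prod0 p0) => e; split=> //; [apply/Asym | apply/Asym].
  apply: (rel_00 hs Aii Uii h2 h3) => //.
    by apply: U0; rewrite e1 eqxx orbT.
  by apply: U0; rewrite e2 eqxx orbT.
case: eqP => [p1 [<-]|_].
  have [e1 e2] := prod1 nij nji p1.
  exact: (rel_A2 hs Aii Uii h2 h3 e1 e2 (U1 _ _ e1 e2)).
case: eqP => [p2 [<-]|_].
  case: (prod2 nij nji p2) => [[e1 e2]|[e1 e2]].
    by case: (U2 _ _ e1 e2) => hu; [exact: (rel_B2a hs Aii Uii h2 h3 e1 e2 hu) | exact: (rel_B2b hs Aii Uii h2 h3 e1 e2 hu)].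
  apply: (swap_iter hs Aii Uii).
  by case: (U2 _ _ e2 e1) => hu; [exact: (rel_B2a hs Aii Uii h2 h3 e2 e1 hu) | exact: (rel_B2b hs Aii Uii h2 h3 e2 e1 hu)].
case: eqP => [p3 [<-]|_ //].
case: (prod3 nij nji p3) => [[e1 e2]|[e1 e2]].
  case: (U3 _ _ e1 e2) => hu.
  - exact: (rel_G2a hs Aii Uii h2 h3 e1 e2 hu).
  - exact: (rel_G2b hs Aii Uii h2 h3 e1 e2 hu).
  - exact: (rel_G2c hs Aii Uii h2 h3 e1 e2 hu).
  - exact: (rel_G2d hs Aii Uii h2 h3 e1 e2 hu).
apply: (swap_iter hs Aii Uii).
case: (U3 _ _ e2 e1) => hu.
- exact: (rel_G2a hs Aii Uii h2 h3 e2 e1 hu).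
- exact: (rel_G2b hs Aii Uii h2 h3 e2 e1 hu).
- exact: (rel_G2c hs Aii Uii h2 h3 e2 e1 hu).
- exact: (rel_G2d hs Aii Uii h2 h3 e2 e1 hu).
Qed.
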